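(* $\operatorname{Proj}^+_\mathbb{R}\le_{\mathrm{W}}\operatorname{LLPO}*\lim$.
   Context: Represented spaces: a representation of a set $X$ is a partial surjection $\delta_X:\subseteq\mathbb{N}^\mathbb{N}\to X$. For a partial multi-valued function $f:\subseteq X\rightrightarrows Y$, a realizer is a partial $F:\subseteq\mathbb{N}^\mathbb{N}\to\mathbb{N}^\mathbb{N}$ with $\delta_Y(F(p))\in f(\delta_X(p))$ for all $p$ with $\delta_X(p)\in\mathrm{dom}(f)$. Weihrauch reducibility: $f\le_{\mathrm{W}} g$ iff there are computable partial $H:\subseteq\mathbb{N}^\mathbb{N}\times\mathbb{N}^\mathbb{N}\to\mathbb{N}^\mathbb{N}$ and $K:\subseteq\mathbb{N}^\mathbb{N}\to\mathbb{N}^\mathbb{N}$ such that $p\mapsto H(p,G(K(p)))$ is a realizer of $f$ for every realizer $G$ of $g$. The compositional product $g*f$ is the Weihrauch degree which is the maximum (it exists) of the degrees of $g_0\circ f_0$ over all $g_0\le_{\mathrm{W}}g$ and $f_0\le_{\mathrm{W}}f$. $\mathbb{R}$ has the Cauchy representation. $\mathcal{A}_+(\mathbb{R})$: closed subsets of $\mathbb{R}$ with positive information, a name of $A$ enumerating exactly the rational open intervals meeting $A$ (for nonempty $A$ equivalently, a sequence of reals whose closure is $A$). $\operatorname{Proj}^+_\mathbb{R}:\subseteq\mathbb{R}\times\mathcal{A}_+(\mathbb{R})\rightrightarrows\mathbb{R}$ maps $(x,A)$ with $A$ nonempty closed to the set of $y\in A$ with $|x-y|=d(x,A)$. $\operatorname{LLPO}:\subseteq\mathbb{N}^\mathbb{N}\times\mathbb{N}^\mathbb{N}\rightrightarrows\{0,1\}$: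 its domain consists of pairs $(p_0,p_1)$ such that there is at most one pair $(j,m)$ with $p_j(m)\ne0$, and $i\in\operatorname{LLPO}(p_0,p_1)$ iff $p_i=0^\mathbb{N}$. $\lim:\subseteq(\mathbb{N}^\mathbb{N})^\mathbb{N}\to\mathbb{N}^\mathbb{N}$ maps a convergent sequence in Baire space to its limit. *)

(* Defs.v *)
From Stdlib Require Import Reals Rtopology QArith Qreals Arith List.
Open Scope R_scope.

Definition Baire := nat -> nat.

Definition npair (a b : nat) : nat := ((a + b) * (a + b + 1) / 2 + b)%nat.
Definition nunpair (z : nat) : nat * nat :=
  let w := ((Nat.sqrt (8 * z + 1) - 1) / 2)%nat in
  let t := (w * (w + 1) / 2)%nat in
  let y := (z - t)%nat in
  ((w - y)%nat, y).

Fixpoint lcode (l : list nat) : nat :=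
  match l with nil => 0%nat | x :: l' => S (npair x (lcode l')) end.

Definition prefix (p : Baire) (k : nat) : list nat := map p (seq 0 k).

Definition bpair (p q : Baire) : Baire :=
  fun n => if Nat.even n then p (Nat.div2 n) else q (Nat.div2 n).
Definition beven (p : Baire) : Baire := fun n => p (2 * n)%nat.
Definition bodd (p : Baire) : Baire := fun n => p (2 * n + 1)%nat.

Inductive rec : Type :=
| RZero : rec
| RSucc : rec
| RProj : nat -> rec
| RComp : rec -> list rec -> rec
| RPrimRec : rec -> rec -> rec
| RMu : rec -> rec.

Inductive evalR : rec -> list nat -> nat -> Prop :=
| eZero v : evalR RZero v 0
| eSucc x v : evalR RSucc (x :: v) (S x)
| eProj i v : (i < length v)%nat -> evalR (RProj i) v (nth i v 0%nat)
| eComp f gs v ys y :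
    Forall2 (fun g y => evalR g v y) gs ys -> evalR f ys y -> evalR (RComp f gs) v y
| ePR0 f g v y : evalR f v y -> evalR (RPrimRec f g) (0%nat :: v) y
| ePRS f g n v r y :
    evalR (RPrimRec f g) (n :: v) r -> evalR g (n :: r :: v) y ->
    evalR (RPrimRec f g) (S n :: v) y
| eMu f v n :
    evalR f (n :: v) 0 ->
    (forall m, (m < n)%nat -> exists k, evalR f (m :: v) (S k)) ->
    evalR (RMu f) v n.

(* Type-2 machine given by the code e: the partial computable function
   Phi_e : B -> B with Phi_e(p) = q iff for every n, the first k with
   e(<n, p|k>) <> 0 exists and e(<n, p|k>) = q(n) + 1. *)
Definition computes (e : rec) (p q : Baire) : Prop :=
  forall n, exists k,
    evalR e (npair n (lcode (prefix p k)) :: nil) (S (q n)) /\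
    forall k', (k' < k)%nat -> evalR e (npair n (lcode (prefix p k')) :: nil) 0%nat.

(* a representation, given as the graph of the partial map delta *)
Record rspace : Type := RSpace { carrier : Type; delta : Baire -> carrier -> Prop }.

Record mvf (X Y : rspace) : Type :=
  MVF { mdom : carrier X -> Prop; mval : carrier X -> carrier Y -> Prop }.
Arguments mdom {X Y} _ _.
Arguments mval {X Y} _ _ _.

(* realizers (partial realizers extend to total ones, classically) *)
Definition realizer {X Y : rspace} (f : mvf X Y) (F : Baire -> Baire) : Prop :=
  forall p x, delta X p x -> mdom f x ->
    exists y, delta Y (F p) y /\ mval f x y.

Definition Wred {X Y Z W : rspace} (f : mvf X Y) (g : mvf Z W) : Prop :=
  exists eK eH : rec,
    forall G : Baire -> Baire, realizer g G ->
      forall p x, delta X p x -> mdom f x ->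
        exists q s, computes eK p q /\ computes eH (bpair p (G q)) s /\
          exists y, delta Y s y /\ mval f x y.

Definition mcomp {X Y Z : rspace} (g : mvf Y Z) (f : mvf X Y) : mvf X Z :=
  MVF X Z (fun x => mdom f x /\ forall y, mval f x y -> mdom g y)
          (fun x z => exists y, mval f x y /\ mval g y z).

(* f <=_W g * h, where g * h is the maximum of the degrees of g0 o h0 over
   g0 <=_W g, h0 <=_W h *)
Definition Wred_cprod {X Y A B C D : rspace}
  (f : mvf X Y) (g : mvf A B) (h : mvf C D) : Prop :=
  exists (U V W : rspace) (g0 : mvf V W) (h0 : mvf U V),
    Wred g0 g /\ Wred h0 h /\ Wred f (mcomp g0 h0).

Definition BaireS : rspace := RSpace Baire (fun p q => p = q).
Definition Baire2S : rspace :=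
  RSpace (Baire * Baire) (fun p pq => beven p = fst pq /\ bodd p = snd pq).
Definition BaireSeqS : rspace :=
  RSpace (nat -> Baire) (fun p x => x = fun i n => p (npair i n)).
Definition BitS : rspace :=
  RSpace bool (fun p b => p 0%nat = (if b then 1%nat else 0%nat)).

(* rationals: a computable surjection nat -> Q *)
Definition zdec (a : nat) : Z :=
  if Nat.even a then Z.of_nat (Nat.div2 a) else (- Z.of_nat (Nat.div2 (S a)))%Z.
Definition qdec (n : nat) : Q :=
  let (a, b) := nunpair n in Qmake (zdec a) (Pos.of_succ_nat b).

Definition cauchy (p : Baire) (x : R) : Prop :=
  forall n, Rabs (Q2R (qdec (p n)) - x) <= (/ 2) ^ n.
Definition RS : rspace := RSpace R cauchy.

(* rational open intervals: code k is the interval (qdec a, qdec b) *)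
Definition meets (A : R -> Prop) (k : nat) : Prop :=
  let (a, b) := nunpair k in exists x, A x /\ Q2R (qdec a) < x < Q2R (qdec b).

(* A_+(R): p names the closed set A iff p enumerates (p(n) = k+1 lists k,
   p(n) = 0 lists nothing) exactly the codes of rational open intervals
   meeting A *)
Definition Aplus (p : Baire) (A : R -> Prop) : Prop :=
  closed_set A /\ forall k, (exists n, p n = S k) <-> meets A k.
Definition AplusS : rspace := RSpace (R -> Prop) Aplus.

Definition RxAplusS : rspace :=
  RSpace (R * (R -> Prop))
         (fun p xa => cauchy (beven p) (fst xa) /\ Aplus (bodd p) (snd xa)).

Definition is_dist (x : R) (A : R -> Prop) (d : R) : Prop :=
  (forall a, A a -> d <= Rabs (x - a)) /\
  (forall e, (forall a, A a -> e <= Rabs (x - a)) -> e <= d).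

Definition ProjR : mvf RxAplusS RS :=
  MVF RxAplusS RS
    (fun xa => closed_set (snd xa) /\ exists a, snd xa a)
    (fun xa y => snd xa y /\ is_dist (fst xa) (snd xa) (Rabs (fst xa - y))).

Definition LLPO : mvf Baire2S BitS :=
  MVF Baire2S BitS
    (fun pq => forall (j j' : bool) m m',
        (if j then snd pq else fst pq) m <> 0%nat ->
        (if j' then snd pq else fst pq) m' <> 0%nat -> j = j' /\ m = m')
    (fun pq i => (if i then snd pq else fst pq) = fun _ => 0%nat).

Definition baire_conv (x : nat -> Baire) (q : Baire) : Prop :=
  forall k, exists N, forall i, (N <= i)%nat -> forall n, (n < k)%nat -> x i n = q n.

Definition lim : mvf BaireSeqS BaireS :=
  MVF BaireSeqS BaireS (fun x => exists q, baire_conv x q) baire_conv.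

(* Main.v *)
Require Import Defs.
From Stdlib Require Import Reals Rtopology QArith Qreals Arith List.
From Stdlib Require Import Lia Lra ConstructiveEpsilon ClassicalEpsilon.
Import ListNotations.


Open Scope nat_scope.

Definition RepN (n : nat) (f : list nat -> nat) : Prop :=
  exists e, forall v, length v = n -> evalR e v (f v).

Lemma rep_ext n f g : RepN n f -> (forall v, length v = n -> f v = g v) -> RepN n g.
Proof. intros [e He] H. exists e. intros v Hv. rewrite <- H by exact Hv. auto. Qed.

Fixpoint constc (c : nat) : rec :=
  match c with 0 => RZero | S c' => RComp RSucc [constc c'] end.

Lemma eval_constc c v : evalR (constc c) v c.
Proof.
  induction c; simpl. constructor.
  apply eComp with [c]. constructor; [exact IHc| constructor]. constructor.
Qed.

Lemma rep_const n c : RepN n (fun _ => c).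
Proof. exists (constc c). intros; apply eval_constc. Qed.

Lemma rep_proj n i : i < n -> RepN n (fun v => nth i v 0).
Proof. intros H. exists (RProj i). intros v Hv. constructor. lia. Qed.

Definition projs (n : nat) : list rec := map RProj (seq 0 n).

Lemma projs_ok_gen : forall l k v, (forall i, i < length l -> nth (k+i) v 0 = nth i l 0) ->
  k + length l <= length v ->
  Forall2 (fun g y => evalR g v y) (map RProj (seq k (length l))) l.
Proof.
  induction l as [|a l IH]; intros k v H1 H2; simpl. constructor.
  constructor.
  - specialize (H1 0). rewrite Nat.add_0_r in H1. simpl in H1. rewrite <- H1 by lia.
    constructor. simpl in H2. lia.
  - apply IH. intros i Hi. specialize (H1 (S i)). simpl in H1. rewrite <- H1 by lia.
    f_equal; lia. simpl in H2; lia.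
Qed.

Lemma projs_ok v n : length v = n -> Forall2 (fun g y => evalR g v y) (projs n) v.
Proof. intros <-. unfold projs. apply projs_ok_gen; intros; simpl; auto. Qed.

Lemma rep_succ n g : RepN n g -> RepN n (fun v => S (g v)).
Proof.
  intros [e He]. exists (RComp RSucc [e]). intros v Hv.
  apply eComp with [g v]. constructor; [auto|constructor]. constructor.
Qed.

Lemma rep_let n h b : RepN (S n) h -> RepN n b -> RepN n (fun v => h (b v :: v)).
Proof.
  intros [eh Hh] [eb Hb]. exists (RComp eh (eb :: projs n)). intros v Hv.
  apply eComp with (b v :: v). constructor; auto. apply projs_ok; auto.
  apply Hh. simpl; lia.
Qed.

Lemma rep_loop n b s m : RepN n b -> RepN (S (S n)) s -> RepN n m ->
  RepN n (fun v => nat_rect (fun _ => nat) (b v) (fun k r => s (k :: r :: v)) (m v)).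
Proof.
  intros [eb Hb] [es Hs] [em Hm]. exists (RComp (RPrimRec eb es) (em :: projs n)).
  intros v Hv. apply eComp with (m v :: v). constructor; auto. apply projs_ok; auto.
  generalize (m v) as x. induction x; simpl.
  - constructor. auto.
  - eapply ePRS. exact IHx. apply Hs. simpl; lia.
Qed.

Lemma rep_mu n f h : RepN (S n) f ->
  (forall v, length v = n -> f (h v :: v) = 0 /\ forall m, m < h v -> f (m :: v) <> 0) ->
  RepN n h.
Proof.
  intros [ef Hf] H. exists (RMu ef). intros v Hv. destruct (H v Hv) as [H1 H2].
  constructor. rewrite <- H1. apply Hf. simpl; lia.
  intros m Hm. specialize (H2 m Hm). destruct (f (m :: v)) eqn:E. congruence.
  exists n0. rewrite <- E. apply Hf. simpl; lia.
Qed.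

Lemma rep_compL n m h gs : RepN m h -> length gs = m -> Forall (RepN n) gs ->
  RepN n (fun v => h (map (fun g => g v) gs)).
Proof.
  intros [eh Hh] Hl HF.
  assert (exists es, Forall2 (fun e g => forall v, length v = n -> evalR e v (g v)) es gs) as [es Hes].
  { clear Hl. induction HF. exists []. constructor.
    destruct H as [e He]. destruct IHHF as [es Hes]. exists (e :: es). constructor; auto. }
  exists (RComp eh es). intros v Hv. apply eComp with (map (fun g => g v) gs).
  - clear -Hes Hv. induction Hes; simpl; constructor; auto.
  - apply Hh. rewrite length_map; auto.
Qed.

Lemma rep_comp1 n h g : RepN 1 (fun v => h (nth 0 v 0)) -> RepN n g -> RepN n (fun v => h (g v)).
Proof.
  intros H1 H2. pose proof (rep_compL n 1 _ [g] H1 eq_refl (Forall_cons _ H2 (Forall_nil _))).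
  exact H.
Qed.

Lemma rep_comp2 n h g1 g2 : RepN 2 (fun v => h (nth 0 v 0) (nth 1 v 0)) -> RepN n g1 -> RepN n g2 ->
  RepN n (fun v => h (g1 v) (g2 v)).
Proof.
  intros H1 H2 H3.
  pose proof (rep_compL n 2 _ [g1; g2] H1 eq_refl (Forall_cons _ H2 (Forall_cons _ H3 (Forall_nil _)))).
  exact H.
Qed.

Lemma rep_shift n g : RepN n g -> RepN (S n) (fun u => g (tl u)).
Proof.
  intros [eg Hg]. exists (RComp eg (map RProj (seq 1 n))). intros u Hu.
  destruct u as [|a v]; [discriminate|]. simpl in Hu |- *.
  apply eComp with v. 2: apply Hg; lia.
  replace n with (length v) by lia. apply projs_ok_gen. intros; simpl; auto. simpl; lia.
Qed.

Lemma rep_add2 : RepN 2 (fun v => nth 0 v 0 + nth 1 v 0).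
Proof.
  eapply rep_ext.
  apply (rep_loop 2 (fun v => nth 1 v 0) (fun u => S (nth 1 u 0)) (fun v => nth 0 v 0)).
  apply rep_proj; lia. apply rep_succ, rep_proj; lia. apply rep_proj; lia.
  intros v _. simpl. induction (nth 0 v 0); simpl; auto.
Qed.

Lemma rep_mul2 : RepN 2 (fun v => nth 0 v 0 * nth 1 v 0).
Proof.
  eapply rep_ext.
  apply (rep_loop 2 (fun v => 0) (fun u => nth 1 u 0 + nth 3 u 0) (fun v => nth 0 v 0)).
  apply rep_const. apply (rep_comp2 4 Nat.add). apply rep_add2. apply rep_proj; lia. apply rep_proj; lia.
  apply rep_proj; lia.
  intros v _. simpl. induction (nth 0 v 0) as [|n0 IHn]; simpl; auto. rewrite IHn. lia.
Qed.

Lemma rep_pred1 : RepN 1 (fun v => pred (nth 0 v 0)).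
Proof.
  eapply rep_ext.
  apply (rep_loop 1 (fun v => 0) (fun u => nth 0 u 0) (fun v => nth 0 v 0)).
  apply rep_const. apply rep_proj; lia. apply rep_proj; lia.
  intros v _. simpl. destruct (nth 0 v 0); simpl; auto.
Qed.

Lemma rep_sub2 : RepN 2 (fun v => nth 0 v 0 - nth 1 v 0).
Proof.
  eapply rep_ext.
  apply (rep_loop 2 (fun v => nth 0 v 0) (fun u => pred (nth 1 u 0)) (fun v => nth 1 v 0)).
  apply rep_proj; lia. apply (rep_comp1 4 pred). apply rep_pred1. apply rep_proj; lia. apply rep_proj; lia.
  intros v _. simpl. generalize (nth 0 v 0) (nth 1 v 0). intros a b. induction b as [|b IH]; simpl. lia. rewrite IH. lia.
Qed.


Open Scope nat_scope.

Fixpoint bs (P : nat -> bool) (B : nat) : nat :=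
  match B with
  | 0 => 0
  | S B' => let r := bs P B' in if r <? B' then r else if P B' then B' else S B'
  end.

Lemma bs_le P B : bs P B <= B.
Proof. induction B; simpl; auto. destruct (Nat.ltb_spec (bs P B) B); try lia. destruct (P B); lia. Qed.

Lemma bs_false P B : forall m, m < bs P B -> P m = false.
Proof.
  induction B; simpl; intros m Hm. lia.
  destruct (Nat.ltb_spec (bs P B) B). auto.
  pose proof (bs_le P B). assert (bs P B = B) by lia.
  destruct (P B) eqn:E. apply IHB; lia.
  destruct (Nat.eq_dec m B). subst; auto. apply IHB; lia.
Qed.

Lemma bs_true P B : bs P B < B -> P (bs P B) = true.
Proof.
  induction B; simpl; intros H. lia.
  destruct (Nat.ltb_spec (bs P B) B). auto.
  destruct (P B) eqn:E. auto. lia.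
Qed.

Lemma bs_spec P B m : m < B -> P m = true -> bs P B <= m /\ P (bs P B) = true.
Proof.
  intros H1 H2. destruct (Nat.lt_ge_cases m (bs P B)).
  rewrite (bs_false P B m) in H2; auto. discriminate.
  split; auto. apply bs_true. lia.
Qed.

Lemma bs_ext P Q B : (forall t, t < B -> P t = Q t) -> bs P B = bs Q B.
Proof.
  induction B; simpl; intros H; auto. rewrite IHB by (intros; apply H; lia).
  rewrite H by lia. reflexivity.
Qed.

Inductive expr : Type :=
| EVar (i : nat)
| EConst (c : nat)
| ESucc (a : expr)
| ERec (b s m : expr)
| ESearch (body bound : expr)
| ELet (a body : expr)
| EOp1 (f : nat -> nat) (H : RepN 1 (fun v => f (nth 0 v 0))) (a : expr)
| EOp2 (f : nat -> nat -> nat) (H : RepN 2 (fun v => f (nth 0 v 0) (nth 1 v 0))) (a b : expr)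
| EOp3 (f : nat -> nat -> nat -> nat) (H : RepN 3 (fun v => f (nth 0 v 0) (nth 1 v 0) (nth 2 v 0))) (a b c : expr).

Fixpoint evalE (e : expr) (v : list nat) : nat :=
  match e with
  | EVar i => nth i v 0
  | EConst c => c
  | ESucc a => S (evalE a v)
  | ERec b s m => nat_rect (fun _ => nat) (evalE b v) (fun k r => evalE s (k :: r :: v)) (evalE m v)
  | ESearch body B => bs (fun t => negb (evalE body (t :: v) =? 0)) (evalE B v)
  | ELet a body => evalE body (evalE a v :: v)
  | EOp1 f _ a => f (evalE a v)
  | EOp2 f _ a b => f (evalE a v) (evalE b v)
  | EOp3 f _ a b c => f (evalE a v) (evalE b v) (evalE c v)
  end.

Fixpoint wf (n : nat) (e : expr) : bool :=
  match e with
  | EVar i => i <? n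
  | EConst _ => true
  | ESucc a => wf n a
  | ERec b s m => wf n b && wf (S (S n)) s && wf n m
  | ESearch body B => wf (S n) body && wf n B
  | ELet a body => wf n a && wf (S n) body
  | EOp1 _ _ a => wf n a
  | EOp2 _ _ a b => wf n a && wf n b
  | EOp3 _ _ a b c => wf n a && wf n b && wf n c
  end.

Lemma compile : forall e n, wf n e = true -> RepN n (evalE e).
Proof.
  induction e; intros n Hw; simpl in Hw |- *.
  - apply rep_proj. apply Nat.ltb_lt; auto.
  - apply rep_const.
  - apply rep_succ; auto.
  - apply andb_prop in Hw as [Hw Hw3]. apply andb_prop in Hw as [Hw1 Hw2].
    apply rep_loop; auto.
  - apply andb_prop in Hw as [Hw1 Hw2].
    set (B := evalE e2). set (bd := evalE e1).
    apply rep_mu with (f := fun u => (B (tl u) - hd 0 u) * (1 - bd u)).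
    + apply (rep_comp2 _ Nat.mul). apply rep_mul2.
      apply (rep_comp2 _ Nat.sub). apply rep_sub2. apply rep_shift; auto.
      eapply rep_ext; [apply (rep_proj _ 0); lia | intros [|? ?] _; reflexivity].
      apply (rep_comp2 _ Nat.sub). apply rep_sub2. apply rep_const. auto.
    + intros v Hv. cbn [tl hd]. set (P := fun t => negb (bd (t :: v) =? 0)).
      fold P. split.
      * destruct (Nat.lt_ge_cases (bs P (B v)) (B v)) as [H|H].
        -- pose proof (bs_true P (B v) H) as H0.
           destruct (bd (bs P (B v) :: v)) eqn:E. unfold P at 1 in H0. rewrite E in H0. discriminate. lia.
        -- replace (B v - bs P (B v)) with 0 by lia. lia.
      * intros m Hm. pose proof (bs_false P (B v) m Hm) as H. 
        pose proof (bs_le P (B v)).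
        destruct (bd (m :: v)) eqn:E. lia. unfold P in H. rewrite E in H. discriminate.
  - apply andb_prop in Hw as [Hw1 Hw2]. apply rep_let; auto.
  - apply rep_comp1; auto.
  - apply andb_prop in Hw as [Hw1 Hw2]. apply rep_comp2; auto.
  - apply andb_prop in Hw as [Hw Hw3]. apply andb_prop in Hw as [Hw1 Hw2].
    pose proof (rep_compL n 3 _ [evalE e1; evalE e2; evalE e3] H eq_refl
      (Forall_cons _ (IHe1 _ Hw1) (Forall_cons _ (IHe2 _ Hw2) (Forall_cons _ (IHe3 _ Hw3) (Forall_nil _))))).
    exact H0.
Qed.

Lemma compile_ext e n f : wf n e = true -> (forall v, length v = n -> evalE e v = f v) -> RepN n f.
Proof. intros H1 H2. eapply rep_ext. apply compile; eauto. auto. Qed.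


Open Scope nat_scope.

Lemma len1 (v : list nat) : length v = 1 -> v = [nth 0 v 0].
Proof. destruct v as [|a [|b v]]; simpl; intros; try discriminate; auto. Qed.
Lemma len2 (v : list nat) : length v = 2 -> v = [nth 0 v 0; nth 1 v 0].
Proof. destruct v as [|a [|b [|c v]]]; simpl; intros; try discriminate; auto. Qed.
Lemma len3 (v : list nat) : length v = 3 -> v = [nth 0 v 0; nth 1 v 0; nth 2 v 0].
Proof. destruct v as [|a [|b [|c [|d v]]]]; simpl; intros; try discriminate; auto. Qed.

Lemma mk_op1 E : wf 1 E = true -> RepN 1 (fun v => evalE E [nth 0 v 0]).
Proof. intros H. apply compile_ext with E; auto. intros v Hv. rewrite <- len1; auto. Qed.
Lemma mk_op2 E : wf 2 E = true -> RepN 2 (fun v => evalE E [nth 0 v 0; nth 1 v 0]).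
Proof. intros H. apply compile_ext with E; auto. intros v Hv. rewrite <- len2; auto. Qed.
Lemma mk_op3 E : wf 3 E = true -> RepN 3 (fun v => evalE E [nth 0 v 0; nth 1 v 0; nth 2 v 0]).
Proof. intros H. apply compile_ext with E; auto. intros v Hv. rewrite <- len3; auto. Qed.

Lemma mkop1 E F : wf 1 E = true -> (forall x, evalE E [x] = F x) -> RepN 1 (fun v => F (nth 0 v 0)).
Proof. intros H1 H2. eapply rep_ext. apply (mk_op1 E H1). intros; apply H2. Qed.
Lemma mkop2 E F : wf 2 E = true -> (forall x y, evalE E [x; y] = F x y) -> RepN 2 (fun v => F (nth 0 v 0) (nth 1 v 0)).
Proof. intros H1 H2. eapply rep_ext. apply (mk_op2 E H1). intros; apply H2. Qed.
Lemma mkop3 E F : wf 3 E = true -> (forall x y z, evalE E [x; y; z] = F x y z) -> RepN 3 (fun v => F (nth 0 v 0) (nth 1 v 0) (nth 2 v 0)).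
Proof. intros H1 H2. eapply rep_ext. apply (mk_op3 E H1). intros; apply H2. Qed.

Definition eadd a b := EOp2 Nat.add rep_add2 a b.
Definition emul a b := EOp2 Nat.mul rep_mul2 a b.
Definition esub a b := EOp2 Nat.sub rep_sub2 a b.
Ltac ev := cbn [evalE nth eadd emul esub].

Definition nif (c a b : nat) : nat := if c =? 0 then b else a.
Lemma rep_nif : RepN 3 (fun v => nif (nth 0 v 0) (nth 1 v 0) (nth 2 v 0)).
Proof.
  apply (mkop3 (eadd (emul (EVar 1) (esub (EConst 1) (esub (EConst 1) (EVar 0))))
                                   (emul (EVar 2) (esub (EConst 1) (EVar 0))))). reflexivity.
  intros c a b. ev. unfold nif. destruct c; simpl; lia.
Qed.
Definition eif c a b := EOp3 nif rep_nif c a b.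
Ltac ev ::= cbn [evalE nth eadd emul esub eif].

Definition nle (a b : nat) : nat := if a <=? b then 1 else 0.
Lemma rep_nle : RepN 2 (fun v => nle (nth 0 v 0) (nth 1 v 0)).
Proof.
  apply (mkop2 (esub (EConst 1) (esub (EVar 0) (EVar 1)))). reflexivity.
  intros x y. ev. unfold nle. destruct (Nat.leb_spec x y); lia.
Qed.
Definition ele a b := EOp2 nle rep_nle a b.
Definition elt a b := ele (ESucc a) b.
Ltac ev ::= cbn [evalE nth eadd emul esub eif ele elt].

Definition neq (a b : nat) : nat := if a =? b then 1 else 0.
Lemma rep_neq : RepN 2 (fun v => neq (nth 0 v 0) (nth 1 v 0)).
Proof.
  apply (mkop2 (emul (ele (EVar 0) (EVar 1)) (ele (EVar 1) (EVar 0)))). reflexivity.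
  intros x y. simpl. unfold neq, nle.
  destruct (Nat.eqb_spec x y); destruct (Nat.leb_spec x y);
  destruct (Nat.leb_spec y x); lia.
Qed.
Definition eeq a b := EOp2 neq rep_neq a b.
Definition enot a := esub (EConst 1) a.
Definition eand a b := eif a (eif b (EConst 1) (EConst 0)) (EConst 0).
Definition eor a b := eif a (EConst 1) (eif b (EConst 1) (EConst 0)).

Definition tri (w : nat) : nat := w * (w + 1) / 2.
Lemma tri_0 : tri 0 = 0. Proof. reflexivity. Qed.
Lemma tri_S w : tri (S w) = tri w + S w.
Proof.
  unfold tri. replace (S w * (S w + 1)) with (w * (w + 1) + (S w) * 2) by lia.
  rewrite Nat.div_add by lia. reflexivity.
Qed.
Lemma tri2 w : 2 * tri w = w * (w + 1).
Proof. induction w. reflexivity. rewrite tri_S. nia. Qed.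

Lemma rep_tri : RepN 1 (fun v => tri (nth 0 v 0)).
Proof.
  apply (mkop1 (ERec (EConst 0) (eadd (EVar 1) (ESucc (EVar 0))) (EVar 0))). reflexivity.
  intros x. simpl. induction x as [|k IH]. reflexivity. simpl. rewrite IH, tri_S. lia.
Qed.
Definition etri a := EOp1 tri rep_tri a.
Ltac ev ::= cbn [evalE nth eadd emul esub eif ele elt eeq enot eand eor etri].

Lemma npair_tri a b : npair a b = tri (a + b) + b.
Proof. reflexivity. Qed.

Lemma rep_npair : RepN 2 (fun v => npair (nth 0 v 0) (nth 1 v 0)).
Proof.
  apply (mkop2 (eadd (etri (eadd (EVar 0) (EVar 1))) (EVar 1))). reflexivity.
  intros x y. simpl. rewrite npair_tri. reflexivity.
Qed.
Definition epair a b := EOp2 npair rep_npair a b.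
Ltac ev ::= cbn [evalE nth eadd emul esub eif ele elt eeq enot eand eor etri epair].

Lemma tri_mono a b : a <= b -> tri a <= tri b.
Proof. intros H. induction H. lia. rewrite tri_S. lia. Qed.

Lemma nunpair_spec z w : tri w <= z < tri (S w) -> nunpair z = (w - (z - tri w), z - tri w).
Proof.
  intros [H1 H2]. rewrite tri_S in H2. unfold nunpair.
  set (s := Nat.sqrt (8 * z + 1)).
  assert (Hs : s * s <= 8 * z + 1 < S s * S s) by (apply Nat.sqrt_spec; lia).
  pose proof (tri2 w).
  assert (2 * w + 1 <= s).
  { destruct (Nat.le_gt_cases (2 * w + 1) s); auto.
    assert (S s * S s <= (2 * w + 1) * (2 * w + 1)) by (apply Nat.mul_le_mono; lia). nia. }
  assert (s <= 2 * w + 2).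
  { destruct (Nat.le_gt_cases s (2 * w + 2)); auto.
    assert ((2 * w + 3) * (2 * w + 3) <= s * s) by (apply Nat.mul_le_mono; lia). nia. }
  assert (Hw : (s - 1) / 2 = w).
  { assert (s = 2 * w + 1 \/ s = 2 * w + 2) as [E|E] by lia; rewrite E.
    replace (2 * w + 1 - 1) with (w * 2) by lia. apply Nat.div_mul; lia.
    replace (2 * w + 2 - 1) with (1 + w * 2) by lia. rewrite Nat.div_add by lia. reflexivity. }
  rewrite Hw. fold (tri w). reflexivity.
Qed.

Lemma nunpair_npair a b : nunpair (npair a b) = (a, b).
Proof.
  rewrite (nunpair_spec _ (a + b)). rewrite npair_tri. f_equal; lia.
  rewrite npair_tri, tri_S. lia.
Qed.

Lemma tri_bracket z : exists w, tri w <= z < tri (S w).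
Proof.
  induction z. exists 0. rewrite tri_S, tri_0. lia.
  destruct IHz as [w Hw]. rewrite tri_S in Hw.
  destruct (Nat.eq_dec (S z) (tri w + S w)).
  exists (S w). rewrite !tri_S. lia. exists w. rewrite tri_S. lia.
Qed.

Lemma npair_nunpair z : npair (fst (nunpair z)) (snd (nunpair z)) = z.
Proof.
  destruct (tri_bracket z) as [w Hw]. rewrite (nunpair_spec z w Hw). simpl.
  rewrite tri_S in Hw. rewrite npair_tri.
  replace (w - (z - tri w) + (z - tri w)) with w by lia. lia.
Qed.

Lemma npair_ge_l a b : a <= npair a b.
Proof. rewrite npair_tri. pose proof (tri2 (a+b)). nia. Qed.
Lemma npair_ge_r a b : b <= npair a b.
Proof. rewrite npair_tri. lia. Qed.
Lemma npair_mono a b a' b' : a <= a' -> b <= b' -> npair a b <= npair a' b'.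
Proof. intros. rewrite !npair_tri. pose proof (tri_mono (a+b) (a'+b')). lia. Qed.
Lemma nfst_le z : fst (nunpair z) <= z.
Proof. rewrite <- (npair_nunpair z) at 2. apply npair_ge_l. Qed.
Lemma nsnd_le z : snd (nunpair z) <= z.
Proof. rewrite <- (npair_nunpair z) at 2. apply npair_ge_r. Qed.
Lemma npair_inj a b a' b' : npair a b = npair a' b' -> a = a' /\ b = b'.
Proof. intros H. pose proof (nunpair_npair a b). rewrite H, nunpair_npair in H0. inversion H0; auto. Qed.

Definition Ewunp : expr := ESearch (elt (EVar 1) (etri (ESucc (EVar 0)))) (ESucc (EVar 0)).

Lemma Ewunp_spec z : tri (evalE Ewunp [z]) <= z < tri (S (evalE Ewunp [z])).
Proof.
  destruct (tri_bracket z) as [w Hw].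
  set (P := fun t => negb (evalE (elt (EVar 1) (etri (ESucc (EVar 0)))) [t; z] =? 0)).
  assert (HP : forall t, P t = true <-> z < tri (S t)).
  { intros t. unfold P. simpl. unfold nle. destruct (Nat.leb_spec (S z) (tri (S t))); simpl; split; intros; try lia; auto; discriminate. }
  assert (w < S z). { destruct (Nat.le_gt_cases (S z) w); auto. pose proof (tri_mono _ _ H). rewrite tri_S in Hw. 
     assert (tri z + z >= z) by lia. rewrite tri_S in H0. lia. }
  destruct (bs_spec P (S z) w H) as [H1 H2]. apply HP; lia.
  change (evalE Ewunp [z]) with (bs P (S z)). apply HP in H2. split; auto.
  destruct (Nat.eq_dec (bs P (S z)) w) as [->|]; [lia|].
  assert (bs P (S z) < w) by lia. pose proof (bs_false P (S z)).
  (* tri (S b) > z but b < w means tri (S b) <= tri w <= z *)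
  pose proof (tri_mono (S (bs P (S z))) w ltac:(lia)). lia.
Qed.

Lemma rep_nfst : RepN 1 (fun v => fst (nunpair (nth 0 v 0))).
Proof.
  apply (mkop1 (ELet Ewunp (esub (EVar 0) (esub (EVar 1) (etri (EVar 0))))) (fun z => fst (nunpair z))). reflexivity.
  intros z. ev. rewrite (nunpair_spec z (evalE Ewunp [z])). reflexivity.
  apply Ewunp_spec.
Qed.
Lemma rep_nsnd : RepN 1 (fun v => snd (nunpair (nth 0 v 0))).
Proof.
  apply (mkop1 (ELet Ewunp (esub (EVar 1) (etri (EVar 0)))) (fun z => snd (nunpair z))). reflexivity.
  intros z. ev. rewrite (nunpair_spec z (evalE Ewunp [z])). reflexivity.
  apply Ewunp_spec.
Qed.
Definition efst a := EOp1 (fun z => fst (nunpair z)) rep_nfst a.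
Definition esnd a := EOp1 (fun z => snd (nunpair z)) rep_nsnd a.
Ltac ev ::= cbn [evalE nth eadd emul esub eif ele elt eeq enot eand eor etri epair efst esnd].


Open Scope nat_scope.

Definition tailc (c : nat) : nat := snd (nunpair (pred c)).
Definition headc (c : nat) : nat := fst (nunpair (pred c)).
Definition epred a := EOp1 pred rep_pred1 a.
Lemma rep_tailc : RepN 1 (fun v => tailc (nth 0 v 0)).
Proof. apply (mkop1 (esnd (epred (EVar 0)))). reflexivity. reflexivity. Qed.
Lemma rep_headc : RepN 1 (fun v => headc (nth 0 v 0)).
Proof. apply (mkop1 (efst (epred (EVar 0)))). reflexivity. reflexivity. Qed.
Definition etail a := EOp1 tailc rep_tailc a.
Definition ehead a := EOp1 headc rep_headc a.

Definition iterc (t c : nat) : nat := nat_rect (fun _ => nat) c (fun _ r => tailc r) t.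
Lemma rep_iterc : RepN 2 (fun v => iterc (nth 0 v 0) (nth 1 v 0)).
Proof. apply (mkop2 (ERec (EVar 1) (etail (EVar 1)) (EVar 0))). reflexivity. reflexivity. Qed.
Definition eiter t c := EOp2 iterc rep_iterc t c.
Definition nthc (t c : nat) : nat := headc (iterc t c).
Lemma rep_nthc : RepN 2 (fun v => nthc (nth 0 v 0) (nth 1 v 0)).
Proof. apply (mkop2 (ehead (eiter (EVar 0) (EVar 1)))). reflexivity. reflexivity. Qed.
Definition enth t c := EOp2 nthc rep_nthc t c.
Definition lenc (c : nat) : nat := bs (fun t => negb (neq (iterc t c) 0 =? 0)) (S c).
Lemma rep_lenc : RepN 1 (fun v => lenc (nth 0 v 0)).
Proof. apply (mkop1 (ESearch (eeq (eiter (EVar 0) (EVar 1)) (EConst 0)) (ESucc (EVar 0)))). reflexivity. reflexivity. Qed.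
Definition elen c := EOp1 lenc rep_lenc c.
Ltac ev ::= cbn [evalE nth eadd emul esub eif ele elt eeq enot eand eor etri epair efst esnd
   epred etail ehead eiter enth elen].

Lemma tailc_cons x l : tailc (lcode (x :: l)) = lcode l.
Proof. unfold tailc. cbn [lcode pred]. rewrite nunpair_npair. reflexivity. Qed.
Lemma headc_cons x l : headc (lcode (x :: l)) = x.
Proof. unfold headc. cbn [lcode pred]. rewrite nunpair_npair. reflexivity. Qed.
Lemma tailc_nil : tailc (lcode []) = 0.
Proof. reflexivity. Qed.

Lemma skipn_S_tl : forall t (l : list nat), skipn (S t) l = tl (skipn t l).
Proof. induction t; intros l; destruct l; simpl; auto. rewrite <- IHt. destruct l; reflexivity. Qed.
Lemma tailc_tl m : tailc (lcode m) = lcode (tl m).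
Proof. destruct m. reflexivity. apply tailc_cons. Qed.

Lemma iterc_lcode t l : iterc t (lcode l) = lcode (skipn t l).
Proof.
  induction t. reflexivity.
  simpl. change (nat_rect (fun _ => nat) (lcode l) (fun _ r => tailc r) t) with (iterc t (lcode l)).
  rewrite IHt, tailc_tl. f_equal. symmetry. apply skipn_S_tl.
Qed.

Lemma nthc_lcode t l : t < length l -> nthc t (lcode l) = nth t l 0.
Proof.
  intros H. unfold nthc. rewrite iterc_lcode. revert l H. induction t; intros l H;
  destruct l; simpl in *; try lia. apply headc_cons. apply IHt. lia.
Qed.

Lemma lcode_ge_len l : length l <= lcode l.
Proof. induction l; simpl; auto. pose proof (npair_ge_r a (lcode l)). lia. Qed.

Lemma lcode_zero l : lcode l = 0 <-> l = [].
Proof. destruct l; simpl; split; intros; congruence. Qed.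

Lemma lenc_lcode l : lenc (lcode l) = length l.
Proof.
  unfold lenc. set (P := fun t => negb (neq (iterc t (lcode l)) 0 =? 0)).
  assert (HP : forall t, P t = true <-> length l <= t).
  { intros t. unfold P, neq. rewrite iterc_lcode.
    destruct (Nat.eqb_spec (lcode (skipn t l)) 0) as [E|E].
    - apply lcode_zero in E. simpl. split; auto. intros _.
      pose proof (firstn_skipn t l). rewrite E, app_nil_r in H. rewrite <- H, length_firstn. lia.
    - simpl. split; intros H; [discriminate|]. exfalso. apply E. apply lcode_zero. apply skipn_all2. auto. }
  pose proof (lcode_ge_len l).
  destruct (bs_spec P (S (lcode l)) (length l)) as [H1 H2]. lia. apply HP; lia.
  apply HP in H2. lia.
Qed.

Definition prefix_nth p k t : t < k -> nth t (prefix p k) 0 = p t.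
Proof.
  intros H. unfold prefix. rewrite nth_indep with (d' := p 0).
  rewrite map_nth. rewrite seq_nth; auto. rewrite length_map, length_seq. auto.
Qed.
Lemma prefix_len p k : length (prefix p k) = k.
Proof. unfold prefix. rewrite length_map, length_seq. auto. Qed.

Lemma nthc_prefix p k t : t < k -> nthc t (lcode (prefix p k)) = p t.
Proof. intros H. rewrite nthc_lcode. apply prefix_nth; auto. rewrite prefix_len; auto. Qed.
Lemma lenc_prefix p k : lenc (lcode (prefix p k)) = k.
Proof. rewrite lenc_lcode, prefix_len. auto. Qed.



Lemma least_nat (P : nat -> Prop) : (forall n, P n \/ ~ P n) -> forall n, P n ->
  exists n, P n /\ forall m, m < n -> ~ P m.
Proof.
  intros Hd n. induction n as [n IH] using (well_founded_induction Nat.lt_wf_0). intros Hn.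
  assert ((exists m, m < n /\ P m) \/ ~ (exists m, m < n /\ P m)).
  { clear IH Hn. induction n. right. intros [m [H _]]. lia.
    destruct IHn as [[m [H1 H2]]|H]. left. exists m. split; auto; lia.
    destruct (Hd n). left. exists n; auto. right. intros [m [H1 H2]].
    destruct (Nat.eq_dec m n). subst; auto. apply H. exists m. split; auto. lia. }
  destruct H as [[m [H1 H2]]|H]. apply (IH m H1 H2).
  exists n. split; auto. intros m Hm Pm. apply H. eauto.
Qed.

Lemma computes_of (F : nat -> nat) : RepN 1 (fun v => F (nth 0 v 0)) ->
  exists e, forall p q,
    (forall n, (exists k, F (npair n (lcode (prefix p k))) = S (q n)) /\
               (forall k, F (npair n (lcode (prefix p k))) = 0 \/ F (npair n (lcode (prefix p k))) = S (q n))) ->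
    computes e p q.
Proof.
  intros [e He]. exists e. intros p q H n. destruct (H n) as [[k Hk] H2].
  destruct (least_nat (fun k => F (npair n (lcode (prefix p k))) <> 0)) with k as [k0 [Hk0 Hl]].
  intros m. destruct (F (npair n (lcode (prefix p m)))); [right|left]; congruence.
  congruence.
  exists k0. split.
  - destruct (H2 k0) as [E|E]. congruence. rewrite <- E. apply (He [_]). reflexivity.
  - intros k' Hk'. specialize (Hl k' Hk'). assert (F (npair n (lcode (prefix p k'))) = 0) by lia.
    rewrite <- H0. apply (He [_]). reflexivity.
Qed.

Lemma computes_pos (pi : nat -> nat) : RepN 1 (fun v => pi (nth 0 v 0)) ->
  exists e, forall p, computes e p (fun n => p (pi n)).
Proof.
  intros Hpi.
  set (E := eif (elt (EOp1 pi Hpi (efst (EVar 0))) (elen (esnd (EVar 0))))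
                (ESucc (enth (EOp1 pi Hpi (efst (EVar 0))) (esnd (EVar 0)))) (EConst 0)).
  destruct (computes_of (fun z => evalE E [z])) as [e He].
  apply mk_op1. reflexivity.
  exists e. intros p. apply He. intros n. unfold E. ev. split.
  - exists (S (pi n)). rewrite nunpair_npair. cbn [fst snd]. rewrite lenc_prefix. unfold nle, nif. rewrite Nat.leb_refl. cbn -[nthc lcode prefix].
    rewrite nthc_prefix; auto.
  - intros k. rewrite nunpair_npair. cbn [fst snd]. rewrite lenc_prefix. unfold nle, nif. destruct (Nat.leb_spec (S (pi n)) k); cbn -[nthc lcode prefix]; auto.
    rewrite nthc_prefix; auto.
Qed.


Open Scope nat_scope.

Lemma div2_sum n : Nat.div2 n + Nat.div2 (S n) = n.
Proof.
  induction n as [n IH] using (well_founded_induction Nat.lt_wf_0).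
  destruct n. reflexivity. destruct n. reflexivity.
  change (Nat.div2 (S (S n))) with (S (Nat.div2 n)). change (Nat.div2 (S (S (S n)))) with (S (Nat.div2 (S n))).
  pose proof (IH n ltac:(lia)). lia.
Qed.

Lemma rep_div2 : RepN 1 (fun v => Nat.div2 (nth 0 v 0)).
Proof.
  apply (mkop1 (ERec (EConst 0) (esub (EVar 0) (EVar 1)) (EVar 0))). reflexivity.
  intros x. ev. induction x. reflexivity. cbn [nat_rect]. rewrite IHx. pose proof (div2_sum x). revert H. generalize (Nat.div2 x) (Nat.div2 (S x)). intros. lia.
Qed.
Definition ediv2 a := EOp1 Nat.div2 rep_div2 a.

Definition neven (n : nat) : nat := if Nat.even n then 1 else 0.
Lemma rep_neven : RepN 1 (fun v => neven (nth 0 v 0)).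
Proof.
  apply (mkop1 (eeq (EVar 0) (emul (EConst 2) (ediv2 (EVar 0))))). reflexivity.
  intros x. ev. cbn [ediv2 evalE nth]. unfold neq, neven. pose proof (Nat.div2_odd x). unfold Nat.b2n in H.
  rewrite <- Nat.negb_odd. revert H. generalize (Nat.div2 x). intros d H. destruct (Nat.odd x);
  match goal with |- context [Nat.eqb ?a ?b] => destruct (Nat.eqb_spec a b) end; simpl; lia.
Qed.
Definition eeven a := EOp1 neven rep_neven a.

Definition pow2 (n : nat) : nat := Nat.pow 2 n.
Lemma rep_pow2 : RepN 1 (fun v => pow2 (nth 0 v 0)).
Proof.
  apply (mkop1 (ERec (EConst 1) (emul (EConst 2) (EVar 1)) (EVar 0))). reflexivity.
  intros x. ev. induction x. reflexivity. cbn [nat_rect]. rewrite IHx. unfold pow2. simpl. lia.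
Qed.
Definition epow2 a := EOp1 pow2 rep_pow2 a.

Definition tP t := fst (nunpair t).
Definition tN t := fst (nunpair (snd (nunpair t))).
Definition tD t := snd (nunpair (snd (nunpair t))).
Definition mktr P N D := npair P (npair N D).
Lemma tP_mk P N D : tP (mktr P N D) = P. Proof. unfold tP, mktr. rewrite nunpair_npair. reflexivity. Qed.
Lemma tN_mk P N D : tN (mktr P N D) = N. Proof. unfold tN, mktr. rewrite nunpair_npair. cbn [fst snd]. rewrite nunpair_npair. reflexivity. Qed.
Lemma tD_mk P N D : tD (mktr P N D) = D. Proof. unfold tD, mktr. rewrite nunpair_npair. cbn [fst snd]. rewrite nunpair_npair. reflexivity. Qed.

Definition emktr a b c := epair a (epair b c).
Definition etP a := efst a.
Definition etN a := efst (esnd a).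
Definition etD a := esnd (esnd a).
Ltac ev ::= cbn [evalE nth eadd emul esub eif ele elt eeq enot eand eor etri epair efst esnd
   epred etail ehead eiter enth elen ediv2 eeven epow2 emktr etP etN etD].

Definition qc (c : nat) : nat :=
  let a := fst (nunpair c) in let b := snd (nunpair c) in
  mktr (nif (neven a) (Nat.div2 a) 0) (nif (neven a) 0 (Nat.div2 (S a))) b.
Lemma rep_qc : RepN 1 (fun v => qc (nth 0 v 0)).
Proof.
  apply (mkop1 (emktr (eif (eeven (efst (EVar 0))) (ediv2 (efst (EVar 0))) (EConst 0))
                      (eif (eeven (efst (EVar 0))) (EConst 0) (ediv2 (ESucc (efst (EVar 0)))))
                      (esnd (EVar 0)))). reflexivity. reflexivity.
Qed.

Definition qadd (x y : nat) : nat :=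
  mktr (tP x * S (tD y) + tP y * S (tD x)) (tN x * S (tD y) + tN y * S (tD x)) (S (tD x) * S (tD y) - 1).
Lemma rep_qadd : RepN 2 (fun v => qadd (nth 0 v 0) (nth 1 v 0)).
Proof.
  apply (mkop2 (emktr (eadd (emul (etP (EVar 0)) (ESucc (etD (EVar 1)))) (emul (etP (EVar 1)) (ESucc (etD (EVar 0)))))
                      (eadd (emul (etN (EVar 0)) (ESucc (etD (EVar 1)))) (emul (etN (EVar 1)) (ESucc (etD (EVar 0)))))
                      (esub (emul (ESucc (etD (EVar 0))) (ESucc (etD (EVar 1)))) (EConst 1)))). reflexivity. reflexivity.
Qed.

Definition qneg (x : nat) : nat := mktr (tN x) (tP x) (tD x).
Lemma rep_qneg : RepN 1 (fun v => qneg (nth 0 v 0)).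
Proof. apply (mkop1 (emktr (etN (EVar 0)) (etP (EVar 0)) (etD (EVar 0)))). reflexivity. reflexivity. Qed.

Definition qhp (n : nat) : nat := mktr 1 0 (pow2 n - 1).
Lemma rep_qhp : RepN 1 (fun v => qhp (nth 0 v 0)).
Proof. apply (mkop1 (emktr (EConst 1) (EConst 0) (esub (epow2 (EVar 0)) (EConst 1)))). reflexivity. reflexivity. Qed.

Definition qle (x y : nat) : nat :=
  nle (tP x * S (tD y) + tN y * S (tD x)) (tP y * S (tD x) + tN x * S (tD y)).
Lemma rep_qle : RepN 2 (fun v => qle (nth 0 v 0) (nth 1 v 0)).
Proof.
  apply (mkop2 (ele (eadd (emul (etP (EVar 0)) (ESucc (etD (EVar 1)))) (emul (etN (EVar 1)) (ESucc (etD (EVar 0)))))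
                    (eadd (emul (etP (EVar 1)) (ESucc (etD (EVar 0)))) (emul (etN (EVar 0)) (ESucc (etD (EVar 1))))))).
  reflexivity. reflexivity.
Qed.

Definition eqc a := EOp1 qc rep_qc a.
Definition eqadd a b := EOp2 qadd rep_qadd a b.
Definition eqneg a := EOp1 qneg rep_qneg a.
Definition eqhp a := EOp1 qhp rep_qhp a.
Definition eqle a b := EOp2 qle rep_qle a b.
Ltac ev ::= cbn [evalE nth eadd emul esub eif ele elt eeq enot eand eor etri epair efst esnd
   epred etail ehead eiter enth elen ediv2 eeven epow2 emktr etP etN etD eqc eqadd eqneg eqhp eqle].

Open Scope R_scope.
Definition val (t : nat) : R := (INR (tP t) - INR (tN t)) / INR (S (tD t)).

Lemma INR_S_pos n : 0 < INR (S n). Proof. apply lt_0_INR. lia. Qed.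

Lemma val_mk P N D : val (mktr P N D) = (INR P - INR N) / INR (S D).
Proof. unfold val. rewrite tP_mk, tN_mk, tD_mk. reflexivity. Qed.

Lemma val_qadd x y : val (qadd x y) = val x + val y.
Proof.
  unfold qadd. rewrite val_mk. unfold val.
  replace (S (S (tD x) * S (tD y) - 1)) with (S (tD x) * S (tD y))%nat by (simpl; lia).
  rewrite !plus_INR, !mult_INR.
  pose proof (INR_S_pos (tD x)). pose proof (INR_S_pos (tD y)).
  field. lra.
Qed.

Lemma val_qneg x : val (qneg x) = - val x.
Proof. unfold qneg. rewrite val_mk. unfold val. pose proof (INR_S_pos (tD x)). field. lra. Qed.

Lemma val_qhp n : val (qhp n) = (/ 2) ^ n.
Proof.
  unfold qhp. rewrite val_mk. unfold pow2.
  assert (Nat.pow 2 n >= 1)%nat by (induction n; simpl; lia).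
  replace (S (2 ^ n - 1)) with (2 ^ n)%nat by lia.
  rewrite pow_INR. simpl (INR 1). simpl (INR 0). replace (INR 2) with 2 by (simpl; lra).
  rewrite pow_inv. field. apply pow_nonzero. lra.
Qed.

Lemma div_le_iff a b c d : 0 < c -> 0 < d -> (a / c <= b / d <-> a * d <= b * c).
Proof.
  intros Hc Hd. split; intros H.
  - apply Rmult_le_compat_r with (r := c * d) in H. 2: nra.
    replace (a / c * (c * d)) with (a * d) in H by (field; lra).
    replace (b / d * (c * d)) with (b * c) in H by (field; lra). auto.
  - apply Rmult_le_reg_r with (r := c * d). nra.
    replace (a / c * (c * d)) with (a * d) by (field; lra).
    replace (b / d * (c * d)) with (b * c) by (field; lra). auto.
Qed.

Lemma qle_spec x y : qle x y <> 0%nat <-> val x <= val y.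
Proof.
  unfold qle, nle, val.
  pose proof (INR_S_pos (tD x)) as Hx. pose proof (INR_S_pos (tD y)) as Hy.
  rewrite div_le_iff by auto.
  destruct (Nat.leb_spec (tP x * S (tD y) + tN y * S (tD x)) (tP y * S (tD x) + tN x * S (tD y))) as [H|H].
  - split; intros _; auto. apply le_INR in H. rewrite !plus_INR, !mult_INR in H. lra.
  - split; intros H2; [lia|]. exfalso. apply lt_INR in H. rewrite !plus_INR, !mult_INR in H. lra.
Qed.

Lemma Q2R_qdec c : Q2R (qdec c) = val (qc c).
Proof.
  unfold qdec, qc. destruct (nunpair c) as [a b] eqn:E. cbn [fst snd]. rewrite val_mk.
  unfold Q2R. cbn [Qnum Qden]. replace (Z.pos (Pos.of_succ_nat b)) with (Z.of_nat (S b)) by lia. rewrite <- INR_IZR_INZ.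
  unfold zdec, neven, nif. destruct (Nat.even a); cbn.
  - rewrite <- INR_IZR_INZ. simpl (INR 0). unfold Rdiv; ring.
  - rewrite opp_IZR, <- INR_IZR_INZ. simpl (INR 0). unfold Rdiv; ring.
Qed.


Open Scope nat_scope.

Definition rho (w : nat) : nat :=
  qadd (qc (fst (nunpair w))) (nif (snd (nunpair (snd (nunpair w)))) (qneg (qhp (fst (nunpair (snd (nunpair w)))))) (qhp (fst (nunpair (snd (nunpair w)))))).
Lemma rep_rho : RepN 1 (fun v => rho (nth 0 v 0)).
Proof.
  apply (mkop1 (eqadd (eqc (efst (EVar 0))) (eif (esnd (esnd (EVar 0))) (eqneg (eqhp (efst (esnd (EVar 0))))) (eqhp (efst (esnd (EVar 0))))))).
  reflexivity. reflexivity.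
Qed.
Definition erho a := EOp1 rho rep_rho a.

Definition Econd : expr :=
  let a := EVar 0 in let x := EVar 1 in let j := EVar 2 in
  let typ := efst a in let prm := esnd a in let cj := efst x in let em := esnd x in
  let k := epred em in let u := eqc (efst k) in let v := eqc (esnd k) in
  let r := erho prm in
  let xlo := eqadd (eqc cj) (eqneg (eqhp j)) in
  let xhi := eqadd (eqc cj) (eqhp j) in
  let r1 := erho (efst prm) in let r2 := erho (efst (esnd prm)) in let r3 := erho (esnd (esnd prm)) in
  let c0 := eand em (eand (eqle r u) (eqle v (eqadd (eqadd xlo xlo) (eqneg r)))) in
  let c1 := eand em (eand (eqle (eqadd (eqadd xhi xhi) (eqneg r)) u) (eqle v r)) in
  let c2 := eor (enot (eand (enot (eqle r2 r1)) (enot (eqle r3 r2)))) (eand em (eand (eqle r1 u) (eqle v r3))) in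
  eif (eeq typ (EConst 0)) c0 (eif (eeq typ (EConst 1)) c1 (eif (eeq typ (EConst 2)) c2 (EConst 0))).

Definition cond3 (a x j : nat) : nat := evalE Econd [a; x; j].
Lemma rep_cond3 : RepN 3 (fun v => cond3 (nth 0 v 0) (nth 1 v 0) (nth 2 v 0)).
Proof. apply mkop3 with Econd. reflexivity. reflexivity. Qed.
Definition econd a x j := EOp3 cond3 rep_cond3 a x j.
Ltac ev ::= cbn [evalE nth eadd emul esub eif ele elt eeq enot eand eor etri epair efst esnd
   epred etail ehead eiter enth elen ediv2 eeven epow2 emktr etP etN etD eqc eqadd eqneg eqhp eqle erho econd].

Lemma nif_and a b : nif a (nif b 1 0) 0 <> 0 <-> a <> 0 /\ b <> 0.
Proof. unfold nif. destruct a, b; simpl; split; intros; try lia; tauto. Qed.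
Lemma nif_or a b : nif a 1 (nif b 1 0) <> 0 <-> a <> 0 \/ b <> 0.
Proof. unfold nif. destruct a, b; simpl; split; intros; try lia; tauto. Qed.
Lemma not_spec a : 1 - a <> 0 <-> a = 0.
Proof. lia. Qed.
Lemma neq_spec a b : neq a b <> 0 <-> a = b.
Proof. unfold neq. destruct (Nat.eqb_spec a b); split; intros; congruence. Qed.

Open Scope R_scope.
Definition Qv (c : nat) : R := Q2R (qdec c).
Definition rhoR (w : nat) : R := val (rho w).
Definition Uv (em : nat) : R := Qv (fst (nunpair (pred em))).
Definition Vv (em : nat) : R := Qv (snd (nunpair (pred em))).

Lemma val_qc c : val (qc c) = Qv c.
Proof. unfold Qv. rewrite Q2R_qdec. reflexivity. Qed.

Lemma rhoR_spec r n s : rhoR (npair r (npair n s)) = Qv r + (if (s =? 0)%nat then 1 else -1) * (/2) ^ n.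
Proof.
  unfold rhoR, rho. rewrite nunpair_npair. cbn [fst snd]. rewrite nunpair_npair. cbn [fst snd].
  rewrite val_qadd, val_qc. unfold nif. destruct (Nat.eqb s 0).
  rewrite val_qhp. ring. rewrite val_qneg, val_qhp. ring.
Qed.

Lemma qlt_spec x y : qle y x = 0%nat <-> val x < val y.
Proof.
  pose proof (qle_spec y x). split; intros.
  - destruct (Rlt_le_dec (val x) (val y)); auto. apply H in r. lia.
  - destruct (Nat.eq_dec (qle y x) 0); auto. apply H in n. lra.
Qed.

Lemma nif_1 a b : nif 1 a b = a. Proof. reflexivity. Qed.
Lemma nif_0 a b : nif 0 a b = b. Proof. reflexivity. Qed.
Ltac cond_simp := unfold cond3, Econd; ev; rewrite ?nunpair_npair; cbn [fst snd]; rewrite ?nunpair_npair; cbn [fst snd];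
  unfold neq; cbn [Nat.eqb]; cbv iota; rewrite ?nif_1, ?nif_0.

Lemma cond3_0 w cj em j : cond3 (npair 0 w) (npair cj em) j <> 0%nat <->
  em <> 0%nat /\ rhoR w <= Uv em /\ Vv em <= 2 * (Qv cj - (/2)^j) - rhoR w.
Proof.
  cond_simp. rewrite !nif_and, !qle_spec, !val_qadd, !val_qneg, !val_qc, !val_qhp.
  unfold rhoR, Uv, Vv. split; intros [? [? ?]]; repeat split; auto; lra.
Qed.

Lemma cond3_1 w cj em j : cond3 (npair 1 w) (npair cj em) j <> 0%nat <->
  em <> 0%nat /\ 2 * (Qv cj + (/2)^j) - rhoR w <= Uv em /\ Vv em <= rhoR w.
Proof.
  cond_simp. rewrite !nif_and, !qle_spec, !val_qadd, !val_qneg, !val_qc, !val_qhp.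
  unfold rhoR, Uv, Vv. split; intros [? [? ?]]; repeat split; auto; lra.
Qed.

Lemma cond3_2 w1 w2 w3 cj em j : cond3 (npair 2 (npair w1 (npair w2 w3))) (npair cj em) j <> 0%nat <->
  ~ (rhoR w1 < rhoR w2 /\ rhoR w2 < rhoR w3) \/ (em <> 0%nat /\ rhoR w1 <= Uv em /\ Vv em <= rhoR w3).
Proof.
  cond_simp. rewrite ?nunpair_npair; cbn [fst snd].
  rewrite nif_or. 
  assert (L1 : forall a b, (1 - nif (1 - a) (nif (1 - b) 1 0) 0 <> 0)%nat <-> ~ (a = 0 /\ b = 0)%nat).
  { intros a b. unfold nif. destruct a, b; simpl; split; intros; try lia; intuition discriminate. }
  rewrite L1. rewrite !nif_and. rewrite !qlt_spec. rewrite !val_qc.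
  unfold rhoR, Uv, Vv. split; (intros [H|[H0 [H1 H2]]]; [left; tauto | right; repeat split; auto; lra]).
Qed.

Lemma cond3_other t w cj em j : (t > 2)%nat -> cond3 (npair t w) (npair cj em) j = 0%nat.
Proof.
  intros Ht. unfold cond3, Econd. ev. rewrite !nunpair_npair. cbn [fst snd].
  unfold neq. destruct t as [|[|[|t]]]; try lia. reflexivity.
Qed.


Open Scope nat_scope.

Definition bodyE : expr :=
  let j := efst (EVar 0) in let m := esnd (EVar 0) in
  eif (elt (emul (EConst 2) j) (EVar 1))
      (eif (elt (eadd (emul (EConst 2) m) (EConst 1)) (EVar 1))
           (econd (EVar 2) (epair (enth (emul (EConst 2) j) (EVar 3)) (enth (eadd (emul (EConst 2) m) (EConst 1)) (EVar 3))) j)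
           (EConst 0))
      (EConst 0).
Definition chkE : expr := elt (ESearch bodyE (EVar 0)) (EVar 0).
Definition chk (i a c : nat) : nat := evalE chkE [i; a; c].
Lemma rep_chk : RepN 3 (fun v => chk (nth 0 v 0) (nth 1 v 0) (nth 2 v 0)).
Proof. apply mkop3 with chkE. reflexivity. reflexivity. Qed.
Definition echk i a c := EOp3 chk rep_chk i a c.
Ltac ev ::= cbn [evalE nth eadd emul esub eif ele elt eeq enot eand eor etri epair efst esnd
   epred etail ehead eiter enth elen ediv2 eeven epow2 emktr etP etN etD eqc eqadd eqneg eqhp eqle erho econd echk].

Definition bodyg (i a : nat) (g : nat -> nat) (t : nat) : nat :=
  let j := fst (nunpair t) in let m := snd (nunpair t) in
  nif (nle (S (2 * j)) i) (nif (nle (S (2 * m + 1)) i) (cond3 a (npair (g (2 * j)) (g (2 * m + 1))) j) 0) 0.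
Definition chkg (i a : nat) (g : nat -> nat) : nat :=
  nle (S (bs (fun t => negb (bodyg i a g t =? 0)) i)) i.

Lemma chk_prefix i a p k : i <= k -> chk i a (lcode (prefix p k)) = chkg i a p.
Proof.
  intros Hik. unfold chk, chkE, chkg. ev. f_equal. f_equal. apply bs_ext. intros t Ht.
  unfold bodyE. ev. unfold bodyg. f_equal. unfold nle at 1 3.
  destruct (Nat.leb_spec (S (2 * fst (nunpair t))) i); auto.
  unfold nle at 1 2. destruct (Nat.leb_spec (S (2 * snd (nunpair t) + 1)) i); auto.
  rewrite !nthc_prefix by lia. reflexivity.
Qed.

Lemma chkg_01 i a g : chkg i a g = 0 \/ chkg i a g = 1.
Proof. unfold chkg, nle. destruct (Nat.leb _ _); auto. Qed.

Lemma chkg_spec i a g : chkg i a g <> 0 <->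
  exists t, t < i /\ 2 * fst (nunpair t) < i /\ 2 * snd (nunpair t) + 1 < i /\
    cond3 a (npair (g (2 * fst (nunpair t))) (g (2 * snd (nunpair t) + 1))) (fst (nunpair t)) <> 0.
Proof.
  unfold chkg. set (P := fun t => negb (bodyg i a g t =? 0)).
  assert (HP : forall t, P t = true <-> 2 * fst (nunpair t) < i /\ 2 * snd (nunpair t) + 1 < i /\
    cond3 a (npair (g (2 * fst (nunpair t))) (g (2 * snd (nunpair t) + 1))) (fst (nunpair t)) <> 0).
  { intros t. unfold P, bodyg. cbv zeta. generalize (fst (nunpair t)) (snd (nunpair t)). intros j m.
    generalize (cond3 a (npair (g (2 * j)) (g (2 * m + 1))) j). intros C. unfold nif, nle.
    destruct (S (2 * j) <=? i) eqn:E1; [apply Nat.leb_le in E1 | apply Nat.leb_gt in E1]; cbn [Nat.eqb negb];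
      [|split; [discriminate|lia]].
    destruct (S (2 * m + 1) <=? i) eqn:E2; [apply Nat.leb_le in E2 | apply Nat.leb_gt in E2]; cbn [Nat.eqb negb];
      [|split; [discriminate|lia]].
    destruct C; cbn; split; intros; try discriminate; try lia; auto. }
  split.
  - intros H. unfold nle in H. destruct (Nat.leb_spec (S (bs P i)) i); [|lia].
    exists (bs P i). split; auto. apply HP. apply bs_true. lia.
  - intros [t [Ht H]]. apply HP in H. destruct (bs_spec P i t Ht H).
    unfold nle. destruct (Nat.leb_spec (S (bs P i)) i); lia.
Qed.

Lemma chkg_mono i i' a g : i <= i' -> chkg i a g <> 0 -> chkg i' a g <> 0.
Proof.
  intros H. rewrite !chkg_spec. intros [t [H1 [H2 [H3 H4]]]]. exists t. repeat split; auto; lia.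
Qed.

Lemma chkg_ex a g : (exists i, chkg i a g <> 0) <->
  exists j m, cond3 a (npair (g (2 * j)) (g (2 * m + 1))) j <> 0.
Proof.
  split.
  - intros [i H]. apply chkg_spec in H. destruct H as [t [_ [_ [_ H]]]]. eauto.
  - intros [j [m H]]. exists (npair j m + 2 * j + 2 * m + 2). apply chkg_spec.
    exists (npair j m). rewrite nunpair_npair. cbn [fst snd]. repeat split; auto; lia.
Qed.

Definition limE : expr :=
  eif (ele (efst (efst (EVar 0))) (elen (esnd (EVar 0))))
      (ESucc (echk (efst (efst (EVar 0))) (esnd (efst (EVar 0))) (esnd (EVar 0)))) (EConst 0).

Lemma computes_lim : exists e, forall p, computes e p (fun N => chkg (fst (nunpair N)) (snd (nunpair N)) p).
Proof.
  destruct (computes_of (fun z => evalE limE [z])) as [e He].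
  apply mk_op1. reflexivity.
  exists e. intros p. apply He. intros N. unfold limE. split.
  - exists (fst (nunpair N)). ev. cbn [echk]. rewrite nunpair_npair. cbn [fst snd]. rewrite lenc_prefix.
    unfold nle at 1. rewrite Nat.leb_refl. unfold nif. cbn [Nat.eqb]. rewrite chk_prefix; auto.
  - intros k. ev. rewrite nunpair_npair. cbn [fst snd]. rewrite lenc_prefix.
    unfold nle, nif. destruct (Nat.leb_spec (fst (nunpair N)) k); cbn [Nat.eqb]; [right; rewrite chk_prefix; auto | left; auto].
Qed.


Open Scope R_scope.

Lemma zdec_surj (z : Z) : exists a, zdec a = z.
Proof.
  destruct (Z.le_gt_cases 0 z).
  - exists (2 * Z.to_nat z)%nat. unfold zdec. rewrite Nat.even_mul. simpl Nat.even.
    cbn [orb]. rewrite Nat.div2_double. lia.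
  - exists (2 * Z.to_nat (- z) - 1)%nat. unfold zdec.
    replace (2 * Z.to_nat (- z) - 1)%nat with (S (2 * (Z.to_nat (- z) - 1)))%nat by lia.
    rewrite Nat.even_succ, Nat.odd_mul. replace (Nat.odd 2) with false by reflexivity. cbn [andb].
    replace (S (S (2 * (Z.to_nat (- z) - 1)))) with (2 * Z.to_nat (-z))%nat by lia.
    rewrite Nat.div2_double. lia.
Qed.

Lemma Qv_code (z : Z) (b : nat) : exists c, Qv c = IZR z / INR (S b).
Proof.
  destruct (zdec_surj z) as [a Ha]. exists (npair a b). unfold Qv, qdec. rewrite nunpair_npair.
  unfold Q2R. cbn [Qnum Qden]. rewrite Ha.
  replace (Z.pos (Pos.of_succ_nat b)) with (Z.of_nat (S b)) by lia. rewrite <- INR_IZR_INZ. reflexivity.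
Qed.

Lemma small_inv e : 0 < e -> exists n, / INR (S n) < e.
Proof.
  intros He. destruct (archimed_cor1 e He) as [N [H1 H2]]. exists (pred N).
  replace (S (pred N)) with N by lia. auto.
Qed.

Lemma dense_code a b : a < b -> exists c, a < Qv c < b.
Proof.
  intros Hab. destruct (small_inv (b - a)) as [n Hn]. lra.
  pose proof (INR_S_pos n) as Hp. set (d := INR (S n)) in *.
  destruct (archimed (a * d)) as [H1 H2].
  destruct (Qv_code (up (a * d)) n) as [c Hc]. exists c. rewrite Hc. fold d.
  split.
  - apply Rmult_lt_reg_r with d; auto. unfold Rdiv. rewrite Rmult_assoc, Rinv_l by lra. lra.
  - assert (IZR (up (a * d)) / d <= a + / d).
    { apply Rmult_le_reg_r with d; auto. unfold Rdiv. rewrite Rmult_assoc, Rinv_l by lra.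
      rewrite Rmult_plus_distr_r, Rinv_l by lra. lra. }
    lra.
Qed.

Lemma rho_dense a b : a < b -> exists w, a < rhoR w < b.
Proof.
  intros H. destruct (dense_code (a - 1) (b - 1)) as [c Hc]. lra.
  exists (npair c (npair 0 0)). rewrite rhoR_spec. simpl. lra.
Qed.

Lemma pow2_ge n : INR n <= 2 ^ n.
Proof.
  induction n. simpl. lra. rewrite S_INR. simpl.
  assert (1 <= 2 ^ n) by (clear; induction n; simpl; lra). lra.
Qed.

Lemma small_pow e : 0 < e -> exists j, (/2) ^ j < e.
Proof.
  intros He. destruct (archimed_cor1 e He) as [N [H1 H2]]. exists N.
  rewrite pow_inv. apply Rle_lt_trans with (/ INR N); auto.
  apply Rinv_le_contravar. apply lt_0_INR; lia. apply pow2_ge.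
Qed.

Lemma pow_pos' j : 0 < (/2) ^ j.
Proof. apply pow_lt. lra. Qed.

Lemma dist_exists x (A : R -> Prop) : (exists a, A a) -> exists d, is_dist x A d.
Proof.
  intros [a0 Ha0].
  destruct (completeness (fun r => exists a, A a /\ r = - Rabs (x - a))) as [m [Hm1 Hm2]].
  - exists 0. intros r [a [_ ->]]. pose proof (Rabs_pos (x - a)). lra.
  - exists (- Rabs (x - a0)). eauto.
  - exists (- m). split.
    + intros a Ha. assert (- Rabs (x - a) <= m) by (apply Hm1; eauto). lra.
    + intros e He. assert (m <= - e). { apply Hm2. intros r [a [Ha ->]]. specialize (He a Ha). lra. } lra.
Qed.

Lemma dist_lt x A d s : is_dist x A d -> ((exists y, A y /\ Rabs (x - y) < s) <-> d < s).
Proof.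
  intros [H1 H2]. split.
  - intros [y [Hy Hs]]. specialize (H1 y Hy). lra.
  - intros Hd. destruct (Classical_Prop.classic (exists y, A y /\ Rabs (x - y) < s)); auto.
    exfalso. assert (s <= d). { apply H2. intros a Ha. destruct (Rle_lt_dec s (Rabs (x - a))); auto.
      exfalso; apply H; eauto. } lra.
Qed.

Lemma dist_nonneg x A d : (exists a, A a) -> is_dist x A d -> 0 <= d.
Proof. intros _ [_ H]. apply H. intros a _. apply Rabs_pos. Qed.

Lemma closed_nbhd (A : R -> Prop) y : closed_set A -> ~ A y -> exists e, 0 < e /\ forall z, Rabs (z - y) < e -> ~ A z.
Proof.
  intros Hc Hy. unfold closed_set, open_set in Hc. destruct (Hc y Hy) as [[e He] H].
  exists e. split; auto.
Qed.

Lemma dist_attained x A d : closed_set A -> (exists a, A a) -> is_dist x A d -> A (x - d) \/ A (x + d).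
Proof.
  intros Hc Hne Hd. pose proof (dist_nonneg x A d Hne Hd) as Hd0.
  destruct (Classical_Prop.classic (A (x - d))) as [H1|H1]; auto.
  destruct (Classical_Prop.classic (A (x + d))) as [H2|H2]; auto. exfalso.
  destruct (closed_nbhd A _ Hc H1) as [e1 [He1 N1]]. destruct (closed_nbhd A _ Hc H2) as [e2 [He2 N2]].
  set (e := Rmin e1 e2). assert (0 < e) by (unfold e; apply Rmin_glb_lt; auto).
  assert (d + e <= d); [|lra].
  destruct Hd as [Hd1 Hd2]. apply Hd2. intros a Ha.
  specialize (Hd1 a Ha).
  destruct (Rle_lt_dec (d + e) (Rabs (x - a))) as [?|Hlt]; auto. exfalso.
  assert (e <= e1) by apply Rmin_l. assert (e <= e2) by apply Rmin_r.
  destruct (Rle_lt_dec a x).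
  - rewrite Rabs_right in Hd1, Hlt by lra. apply (N1 a); auto. apply Rabs_def1; lra.
  - rewrite Rabs_left in Hd1, Hlt by lra. apply (N2 a); auto. apply Rabs_def1; lra.
Qed.


Open Scope R_scope.

Definition AtomP (x : R) (A : R -> Prop) (a : nat) : Prop :=
  let w := snd (nunpair a) in
  match fst (nunpair a) with
  | 0%nat => exists y, A y /\ rhoR w < y < 2 * x - rhoR w
  | 1%nat => exists y, A y /\ 2 * x - rhoR w < y < rhoR w
  | 2%nat => let w1 := fst (nunpair w) in let w2 := fst (nunpair (snd (nunpair w))) in
          let w3 := snd (nunpair (snd (nunpair w))) in
          ~ (rhoR w1 < rhoR w2 /\ rhoR w2 < rhoR w3) \/ exists y, A y /\ rhoR w1 < y < rhoR w3
  | _ => False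
  end.

Lemma enum_meets p A m k : Aplus (bodd p) A -> p (2 * m + 1)%nat = S k ->
  exists y, A y /\ Qv (fst (nunpair k)) < y < Qv (snd (nunpair k)).
Proof.
  intros [_ HA] Hk. assert (meets A k) as Hm. { apply HA. exists m. exact Hk. }
  unfold meets in Hm. destruct (nunpair k) as [u v]. exact Hm.
Qed.

Lemma meets_enum p A cu cv y : Aplus (bodd p) A -> A y -> Qv cu < y < Qv cv ->
  exists m, p (2 * m + 1)%nat = S (npair cu cv).
Proof.
  intros [_ HA] Hy Hi. assert (meets A (npair cu cv)) as Hm.
  { unfold meets. rewrite nunpair_npair. exists y. split; auto. }
  apply HA in Hm. destruct Hm as [m Hm]. exists m. exact Hm.
Qed.

Lemma Rabs_le_between a b : Rabs a <= b -> - b <= a <= b.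
Proof. unfold Rabs. destruct (Rcase_abs a); intros; lra. Qed.

Lemma Uv_S k : Uv (S k) = Qv (fst (nunpair k)). Proof. reflexivity. Qed.
Lemma Vv_S k : Vv (S k) = Qv (snd (nunpair k)). Proof. reflexivity. Qed.

Lemma atom_iff p x A a : cauchy (beven p) x -> Aplus (bodd p) A ->
  ((exists j m, cond3 a (npair (p (2 * j)%nat) (p (2 * m + 1)%nat)) j <> 0%nat) <-> AtomP x A a).
Proof.
  intros Hx HA. unfold AtomP. rewrite <- (npair_nunpair a).
  generalize (fst (nunpair a)) (snd (nunpair a)). intros t w. rewrite nunpair_npair. cbn [fst snd].
  assert (Hc : forall j, Rabs (Qv (p (2 * j)%nat) - x) <= (/2) ^ j) by (intros j; apply Hx).
  destruct t as [|[|[|t]]].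
  -
    split.
    + intros [j [m H]]. apply cond3_0 in H. destruct H as [Hem [H1 H2]].
      destruct (p (2 * m + 1)%nat) as [|k] eqn:E; [congruence|].
      destruct (enum_meets p A m k HA E) as [y [Hy [Hy1 Hy2]]]. exists y. split; auto.
      rewrite Uv_S in H1. rewrite Vv_S in H2. specialize (Hc j). apply Rabs_le_between in Hc. lra.
    + intros [y [Hy [H1 H2]]].
      destruct (small_pow ((2 * x - rhoR w - y) / 4)) as [j Hj]. lra.
      destruct (dense_code (rhoR w) y) as [cu Hcu]. lra.
      destruct (dense_code y (y + (2 * x - rhoR w - y) - 4 * (/2) ^ j)) as [cv Hcv]. lra.
      destruct (meets_enum p A cu cv y HA Hy ltac:(lra)) as [m Hm].
      exists j, m. apply cond3_0. rewrite Hm, Uv_S, Vv_S, nunpair_npair. cbn [fst snd].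
      specialize (Hc j). apply Rabs_le_between in Hc. repeat split; [lia|lra|lra].
  -
    split.
    + intros [j [m H]]. apply cond3_1 in H. destruct H as [Hem [H1 H2]].
      destruct (p (2 * m + 1)%nat) as [|k] eqn:E; [congruence|].
      destruct (enum_meets p A m k HA E) as [y [Hy [Hy1 Hy2]]]. exists y. split; auto.
      rewrite Uv_S in H1. rewrite Vv_S in H2. specialize (Hc j). apply Rabs_le_between in Hc. lra.
    + intros [y [Hy [H1 H2]]].
      destruct (small_pow ((y - (2 * x - rhoR w)) / 4)) as [j Hj]. lra.
      destruct (dense_code (y - (y - (2 * x - rhoR w)) + 4 * (/2) ^ j) y) as [cu Hcu]. lra.
      destruct (dense_code y (rhoR w)) as [cv Hcv]. lra.
      destruct (meets_enum p A cu cv y HA Hy ltac:(lra)) as [m Hm].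
      exists j, m. apply cond3_1. rewrite Hm, Uv_S, Vv_S, nunpair_npair. cbn [fst snd].
      specialize (Hc j). apply Rabs_le_between in Hc. repeat split; [lia|lra|lra].
  -
    rewrite <- (npair_nunpair w). rewrite <- (npair_nunpair (snd (nunpair w))).
    generalize (fst (nunpair w)) (fst (nunpair (snd (nunpair w)))) (snd (nunpair (snd (nunpair w)))).
    intros w1 w2 w3. rewrite !nunpair_npair. cbn [fst snd]. rewrite nunpair_npair. cbn [fst snd].
    split.
    + intros [j [m H]]. apply cond3_2 in H. destruct H as [H|[Hem [H1 H2]]]; [left; auto|right].
      destruct (p (2 * m + 1)%nat) as [|k] eqn:E; [congruence|].
      destruct (enum_meets p A m k HA E) as [y [Hy [Hy1 Hy2]]]. exists y. split; auto.
      rewrite Uv_S in H1. rewrite Vv_S in H2. lra.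
    + intros [H|[y [Hy [H1 H2]]]].
      * exists 0%nat, 0%nat. apply cond3_2. left; auto.
      * destruct (dense_code (rhoR w1) y) as [cu Hcu]. lra.
        destruct (dense_code y (rhoR w3)) as [cv Hcv]. lra.
        destruct (meets_enum p A cu cv y HA Hy ltac:(lra)) as [m Hm].
        exists 0%nat, m. apply cond3_2. right. rewrite Hm, Uv_S, Vv_S, nunpair_npair. cbn [fst snd].
        repeat split; [lia|lra|lra].
  - split; [|tauto]. intros [j [m H]]. rewrite cond3_other in H by lia. congruence.
Qed.


Open Scope nat_scope.

Definition w1 m := fst (nunpair m).
Definition w2 m := fst (nunpair (snd (nunpair m))).
Definition w3 m := snd (nunpair (snd (nunpair m))).

Definition WLg (g : nat -> nat) (m : nat) : nat :=
  g (npair 0 (w1 m)) * (1 - g (npair 0 (w2 m))) * (1 - g (npair 2 m)).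
Definition WRg (g : nat -> nat) (m : nat) : nat :=
  g (npair 1 (w3 m)) * (1 - g (npair 1 (w2 m))) * (1 - g (npair 2 m)).
Definition anyg g m := WLg g m + WRg g m.
Definition nbg g m := neq (bs (fun t => negb (anyg g t =? 0)) m) m.
Definition p0g g m := WLg g m * nbg g m.
Definition p1g g m := WRg g m * (1 - WLg g m) * nbg g m.
Definition outg g n := nif (neven n) (p0g g (Nat.div2 n)) (p1g g (Nat.div2 n)).
Definition Kb m := npair 2 (npair m (npair m m)).

Definition ewL (m c : expr) :=
  emul (emul (enth (epair (EConst 0) (efst m)) c) (esub (EConst 1) (enth (epair (EConst 0) (efst (esnd m))) c)))
       (esub (EConst 1) (enth (epair (EConst 2) m) c)).
Definition ewR (m c : expr) :=
  emul (emul (enth (epair (EConst 1) (esnd (esnd m))) c) (esub (EConst 1) (enth (epair (EConst 1) (efst (esnd m))) c)))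
       (esub (EConst 1) (enth (epair (EConst 2) m) c)).

Definition anyc m c := anyg (fun s => nthc s c) m.
Lemma rep_anyc : RepN 2 (fun v => anyc (nth 0 v 0) (nth 1 v 0)).
Proof. apply (mkop2 (eadd (ewL (EVar 0) (EVar 1)) (ewR (EVar 0) (EVar 1)))). reflexivity. reflexivity. Qed.
Definition WLc m c := WLg (fun s => nthc s c) m.
Lemma rep_WLc : RepN 2 (fun v => WLc (nth 0 v 0) (nth 1 v 0)).
Proof. apply (mkop2 (ewL (EVar 0) (EVar 1))). reflexivity. reflexivity. Qed.
Definition WRc m c := WRg (fun s => nthc s c) m.
Lemma rep_WRc : RepN 2 (fun v => WRc (nth 0 v 0) (nth 1 v 0)).
Proof. apply (mkop2 (ewR (EVar 0) (EVar 1))). reflexivity. reflexivity. Qed.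
Definition nbc m c := nbg (fun s => nthc s c) m.
Lemma rep_nbc : RepN 2 (fun v => nbc (nth 0 v 0) (nth 1 v 0)).
Proof.
  apply (mkop2 (eeq (ESearch (EOp2 anyc rep_anyc (EVar 0) (EVar 2)) (EVar 0)) (EVar 0))). reflexivity. reflexivity.
Qed.
Definition outc n c := outg (fun s => nthc s c) n.
Lemma rep_outc : RepN 2 (fun v => outc (nth 0 v 0) (nth 1 v 0)).
Proof.
  apply (mkop2 (eif (eeven (EVar 0))
     (emul (EOp2 WLc rep_WLc (ediv2 (EVar 0)) (EVar 1)) (EOp2 nbc rep_nbc (ediv2 (EVar 0)) (EVar 1)))
     (emul (emul (EOp2 WRc rep_WRc (ediv2 (EVar 0)) (EVar 1)) (esub (EConst 1) (EOp2 WLc rep_WLc (ediv2 (EVar 0)) (EVar 1))))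
        (EOp2 nbc rep_nbc (ediv2 (EVar 0)) (EVar 1))))).
  reflexivity. reflexivity.
Qed.
Lemma rep_Kb : RepN 1 (fun v => Kb (nth 0 v 0)).
Proof. apply (mkop1 (epair (EConst 2) (epair (EVar 0) (epair (EVar 0) (EVar 0))))). reflexivity. reflexivity. Qed.

Definition llpoE : expr :=
  eif (elt (EOp1 Kb rep_Kb (ediv2 (efst (EVar 0)))) (elen (esnd (EVar 0))))
      (ESucc (EOp2 outc rep_outc (efst (EVar 0)) (esnd (EVar 0)))) (EConst 0).

Lemma idx_le m m' : m' <= m ->
  npair 0 (w1 m') <= Kb m /\ npair 0 (w2 m') <= Kb m /\ npair 2 m' <= Kb m /\
  npair 1 (w3 m') <= Kb m /\ npair 1 (w2 m') <= Kb m.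
Proof.
  intros H. unfold Kb, w1, w2, w3.
  pose proof (nfst_le m'). pose proof (nsnd_le m').
  pose proof (nfst_le (snd (nunpair m'))). pose proof (nsnd_le (snd (nunpair m'))).
  pose proof (npair_ge_l m (npair m m)).
  repeat split; apply npair_mono; lia.
Qed.

Lemma outg_ext g g' n : (forall s, s <= Kb (Nat.div2 n) -> g s = g' s) -> outg g n = outg g' n.
Proof.
  intros H. set (m := Nat.div2 n) in *.
  assert (HL : forall m', m' <= m -> WLg g m' = WLg g' m').
  { intros m' Hm. destruct (idx_le m m' Hm) as [? [? [? [? ?]]]]. unfold WLg. rewrite !H by auto. reflexivity. }
  assert (HR : forall m', m' <= m -> WRg g m' = WRg g' m').
  { intros m' Hm. destruct (idx_le m m' Hm) as [? [? [? [? ?]]]]. unfold WRg. rewrite !H by auto. reflexivity. }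
  assert (Hnb : nbg g m = nbg g' m).
  { unfold nbg. f_equal. apply bs_ext. intros t Ht. unfold anyg. rewrite HL, HR by lia. reflexivity. }
  unfold outg, p0g, p1g. fold m. rewrite HL, HR, Hnb by lia. reflexivity.
Qed.

Lemma computes_llpo : exists e, forall chi, computes e chi (fun n => outg chi n).
Proof.
  destruct (computes_of (fun z => evalE llpoE [z])) as [e He].
  apply mk_op1. reflexivity.
  exists e. intros chi. apply He. intros n. unfold llpoE. split.
  - exists (S (Kb (Nat.div2 n))). ev. rewrite nunpair_npair. cbn [fst snd]. rewrite lenc_prefix.
    unfold nle at 1. rewrite Nat.leb_refl. unfold nif at 1. cbn [Nat.eqb]. f_equal.
    unfold outc. apply outg_ext. intros s Hs. apply nthc_prefix. lia.
  - intros k. ev. rewrite nunpair_npair. cbn [fst snd]. rewrite lenc_prefix.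
    destruct (Nat.leb_spec (S (Kb (Nat.div2 n))) k) as [H|H].
    + right. unfold nle at 1. rewrite (proj2 (Nat.leb_le _ _) H). unfold nif at 1. cbn [Nat.eqb]. f_equal.
      unfold outc. apply outg_ext. intros s Hs. apply nthc_prefix. lia.
    + left. unfold nle at 1. rewrite (proj2 (Nat.leb_gt _ _) H). reflexivity.
Qed.


Open Scope nat_scope.

Definition condg (h : nat -> nat) (n r : nat) : nat :=
  nif (h 1) (h (2 * npair 1 (npair r (npair n 0))) * (1 - h (2 * npair 1 (npair r (npair n 1)))))
            (h (2 * npair 0 (npair r (npair n 1))) * (1 - h (2 * npair 0 (npair r (npair n 0))))).
Definition Kc r n := 2 * npair 1 (npair r (npair n 1)).

Definition condc n r c := condg (fun s => nthc s c) n r.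
Lemma rep_condc : RepN 3 (fun v => condc (nth 0 v 0) (nth 1 v 0) (nth 2 v 0)).
Proof.
  apply (mkop3 (let n := EVar 0 in let r := EVar 1 in let c := EVar 2 in
    eif (enth (EConst 1) c)
      (emul (enth (emul (EConst 2) (epair (EConst 1) (epair r (epair n (EConst 0))))) c)
            (esub (EConst 1) (enth (emul (EConst 2) (epair (EConst 1) (epair r (epair n (EConst 1))))) c)))
      (emul (enth (emul (EConst 2) (epair (EConst 0) (epair r (epair n (EConst 1))))) c)
            (esub (EConst 1) (enth (emul (EConst 2) (epair (EConst 0) (epair r (epair n (EConst 0))))) c))))).
  reflexivity. reflexivity.
Qed.

Definition cbodyE : expr :=
  let r := EVar 0 in let n := efst (EVar 1) in let c := esnd (EVar 1) in
  eand (ele (ESucc (emul (EConst 2) (epair (EConst 1) (epair r (epair n (EConst 1)))))) (elen c))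
       (EOp3 condc rep_condc n r c).
Definition cauchyE : expr :=
  ELet (ESearch cbodyE (esnd (EVar 0)))
       (eif (elt (EVar 0) (esnd (EVar 1))) (ESucc (EVar 0)) (EConst 0)).

Lemma condg_ext h h' n r : (forall s, s <= Kc r n -> h s = h' s) -> condg h n r = condg h' n r.
Proof.
  intros H. unfold condg, Kc in *.
  assert (npair 1 (npair r (npair n 1)) >= 1) by (pose proof (npair_ge_l 1 (npair r (npair n 1))); lia).
  assert (M : forall t u, t <= 1 -> u <= 1 -> 2 * npair t (npair r (npair n u)) <= 2 * npair 1 (npair r (npair n 1))).
  { intros t u Ht Hu. apply Nat.mul_le_mono_l. apply npair_mono; auto. apply npair_mono; auto. apply npair_mono; auto. }
  rewrite (H 1) by lia. rewrite (H (2 * npair 1 (npair r (npair n 0)))) by (apply M; lia).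
  rewrite (H (2 * npair 1 (npair r (npair n 1)))) by (apply M; lia).
  rewrite (H (2 * npair 0 (npair r (npair n 1)))) by (apply M; lia).
  rewrite (H (2 * npair 0 (npair r (npair n 0)))) by (apply M; lia).
  reflexivity.
Qed.

Lemma Kc_mono r r' n : r <= r' -> Kc r n <= Kc r' n.
Proof. intros. unfold Kc. apply Nat.mul_le_mono_l. apply npair_mono; auto. apply npair_mono; lia. Qed.
Lemma Kc_ge r n : r <= Kc r n.
Proof.
  unfold Kc. pose proof (npair_ge_r 1 (npair r (npair n 1))). pose proof (npair_ge_l r (npair n 1)). lia.
Qed.

Lemma computes_cauchy : exists e, forall h, (forall n, exists r, condg h n r <> 0) ->
  exists s, computes e h s /\ forall n, condg h n (s n) <> 0.
Proof.
  destruct (computes_of (fun z => evalE cauchyE [z])) as [e He].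
  apply mk_op1. reflexivity.
  exists e. intros h Hex.
  set (P := fun n r => negb (condg h n r =? 0)).
  assert (HP : forall n r, P n r = true <-> condg h n r <> 0).
  { intros n r. unfold P. destruct (condg h n r); simpl; split; intros; try lia; try discriminate; auto. }
  assert (Hs : forall n, {r | condg h n r <> 0}).
  { intros n. apply constructive_indefinite_ground_description_nat. intros r. destruct (Nat.eq_dec (condg h n r) 0); auto.
    apply Hex. }
  set (s := fun n => bs (P n) (S (proj1_sig (Hs n)))).
  assert (Hs1 : forall n, condg h n (s n) <> 0 /\ forall r, r < s n -> condg h n r = 0).
  { intros n. unfold s. destruct (Hs n) as [r1 Hr1]. cbn [proj1_sig].
    destruct (bs_spec (P n) (S r1) r1) as [H1 H2]. lia. apply HP; auto.
    split. apply HP; auto. intros r Hr. pose proof (bs_false (P n) (S r1) r Hr).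
    destruct (condg h n r) eqn:E; auto. exfalso. assert (P n r = true) by (apply HP; lia). congruence. }
  exists s. split; [|intros n; apply Hs1].
  apply He. intros n.
  assert (Hk : forall k, evalE cauchyE [npair n (lcode (prefix h k))] =
      nif (nle (S (bs (fun r => negb (nif (nle (S (Kc r n)) k) (nif (condc n r (lcode (prefix h k))) 1 0) 0 =? 0))
                        (lcode (prefix h k)))) (lcode (prefix h k)))
          (S (bs (fun r => negb (nif (nle (S (Kc r n)) k) (nif (condc n r (lcode (prefix h k))) 1 0) 0 =? 0))
                        (lcode (prefix h k)))) 0).
  { intros k. unfold cauchyE, cbodyE. ev. rewrite !nunpair_npair. cbn [fst snd]. rewrite lenc_prefix. reflexivity. }
  set (r0 := s n). destruct (Hs1 n) as [Hr0 Hmin]. fold r0 in Hr0, Hmin.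
  assert (Hgood : forall k, S (Kc r0 n) <= k ->
     bs (fun r => negb (nif (nle (S (Kc r n)) k) (nif (condc n r (lcode (prefix h k))) 1 0) 0 =? 0)) (lcode (prefix h k)) = r0).
  { intros k Hk0. set (Q := fun r => _ : bool).
    assert (HQ : forall r, r <= r0 -> Q r = true <-> condg h n r <> 0).
    { intros r Hr. unfold Q. assert (S (Kc r n) <= k) by (pose proof (Kc_mono r r0 n Hr); lia).
      unfold nle at 1. rewrite (proj2 (Nat.leb_le _ _) H). unfold nif at 1. cbn [Nat.eqb].
      unfold condc. rewrite (condg_ext _ h). unfold nif. destruct (condg h n r); simpl; split; intros; try lia; try discriminate; auto.
      intros t Ht. apply nthc_prefix. lia. }
    assert (r0 < lcode (prefix h k)).
    { pose proof (lcode_ge_len (prefix h k)). rewrite prefix_len in H. pose proof (Kc_ge r0 n). lia. }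
    destruct (bs_spec Q _ r0 H) as [H1 H2]. apply HQ; auto.
    apply HQ in H2; auto. destruct (Nat.eq_dec (bs Q (lcode (prefix h k))) r0); auto.
    exfalso. apply H2. apply Hmin. lia. }
  split.
  - exists (S (Kc r0 n)). rewrite Hk, Hgood by lia.
    assert (r0 < lcode (prefix h (S (Kc r0 n)))).
    { pose proof (lcode_ge_len (prefix h (S (Kc r0 n)))). rewrite prefix_len in H. pose proof (Kc_ge r0 n). lia. }
    unfold nle. rewrite (proj2 (Nat.leb_le _ _) H). reflexivity.
  - intros k. rewrite Hk. destruct (Nat.le_gt_cases (S (Kc r0 n)) k) as [Hk0|Hk0].
    + rewrite Hgood by auto. right.
      assert (r0 < lcode (prefix h k)).
      { pose proof (lcode_ge_len (prefix h k)). rewrite prefix_len in H. pose proof (Kc_ge r0 n). lia. }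
      unfold nle. rewrite (proj2 (Nat.leb_le _ _) H). reflexivity.
    + left. set (Q := fun r => _ : bool).
      destruct (Nat.le_gt_cases (lcode (prefix h k)) (bs Q (lcode (prefix h k)))) as [Hb|Hb].
      * unfold nle. rewrite (proj2 (Nat.leb_gt _ _)) by lia. reflexivity.
      * exfalso. pose proof (bs_true Q _ Hb) as HQ. set (b := bs Q (lcode (prefix h k))) in *.
        unfold Q in HQ. unfold nle at 1 in HQ. destruct (Nat.leb_spec (S (Kc b n)) k) as [Hkb|Hkb].
        -- unfold nif at 1 in HQ. cbn [Nat.eqb] in HQ.
           unfold condc in HQ. rewrite (condg_ext _ h) in HQ.
           ++ assert (condg h n b <> 0) by (unfold nif in HQ; destruct (condg h n b); simpl in HQ; [discriminate|lia]).
              destruct (Nat.lt_ge_cases b r0). apply H; apply Hmin; auto.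
              pose proof (Kc_mono r0 b n H0). lia.
           ++ intros t Ht. apply nthc_prefix. lia.
        -- unfold nif in HQ. simpl in HQ. discriminate.
Qed.


Open Scope R_scope.

Definition Vrep (chi : Baire) (xa : R * (R -> Prop)) : Prop :=
  forall a, (chi a = 1%nat /\ AtomP (fst xa) (snd xa) a) \/ (chi a = 0%nat /\ ~ AtomP (fst xa) (snd xa) a).

Lemma atom0_iff x A d w : is_dist x A d -> (AtomP x A (npair 0 w) <-> rhoR w < x - d).
Proof.
  intros Hd. unfold AtomP. rewrite nunpair_npair. cbn [fst snd].
  assert (rhoR w < x - d <-> d < x - rhoR w) by lra. rewrite H.
  rewrite <- (dist_lt x A d (x - rhoR w) Hd). split.
  - intros [y [Hy H1]]. exists y. split; auto. apply Rabs_def1; lra.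
  - intros [y [Hy H1]]. exists y. split; auto. apply Rabs_def2 in H1. lra.
Qed.

Lemma atom1_iff x A d w : is_dist x A d -> (AtomP x A (npair 1 w) <-> x + d < rhoR w).
Proof.
  intros Hd. unfold AtomP. rewrite nunpair_npair. cbn [fst snd].
  assert (x + d < rhoR w <-> d < rhoR w - x) by lra. rewrite H.
  rewrite <- (dist_lt x A d (rhoR w - x) Hd). split.
  - intros [y [Hy H1]]. exists y. split; auto. apply Rabs_def1; lra.
  - intros [y [Hy H1]]. exists y. split; auto. apply Rabs_def2 in H1. lra.
Qed.

Lemma atom2_iff x A m : AtomP x A (npair 2 m) <->
  ~ (rhoR (w1 m) < rhoR (w2 m) /\ rhoR (w2 m) < rhoR (w3 m)) \/ exists y, A y /\ rhoR (w1 m) < y < rhoR (w3 m).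
Proof. unfold AtomP. rewrite nunpair_npair. cbn [fst snd]. reflexivity. Qed.

Lemma chi01 chi xa a : Vrep chi xa -> (chi a = 0%nat \/ chi a = 1%nat).
Proof. intros H. destruct (H a) as [[? _]|[? _]]; auto. Qed.

Lemma chi_1 chi xa a : Vrep chi xa -> (chi a = 1%nat <-> AtomP (fst xa) (snd xa) a).
Proof. intros H. destruct (H a) as [[E P]|[E P]]; rewrite E; split; intros; auto; try lia; tauto. Qed.
Lemma chi_0 chi xa a : Vrep chi xa -> (chi a = 0%nat <-> ~ AtomP (fst xa) (snd xa) a).
Proof. intros H. destruct (H a) as [[E P]|[E P]]; rewrite E; split; intros; auto; try lia; tauto. Qed.

Lemma prod01 a b c : (a = 0 \/ a = 1)%nat -> (b = 0 \/ b = 1)%nat -> (c = 0 \/ c = 1)%nat ->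
  (a * (1 - b) * (1 - c) <> 0)%nat <-> (a = 1 /\ b = 0 /\ c = 0)%nat.
Proof. intros [->| ->] [->| ->] [->| ->]; simpl; split; intros; lia. Qed.


Lemma w_npair a b c : w1 (npair a (npair b c)) = a /\ w2 (npair a (npair b c)) = b /\ w3 (npair a (npair b c)) = c.
Proof. unfold w1, w2, w3. rewrite !nunpair_npair. cbn [fst snd]. rewrite nunpair_npair. auto. Qed.

Lemma WL_sound chi x A d m : Vrep chi (x, A) -> is_dist x A d -> WLg chi m <> 0%nat -> ~ A (x - d).
Proof.
  intros HV Hd H. unfold WLg in H. apply prod01 in H; try (eapply chi01; eauto).
  destruct H as [H1 [H2 H3]].
  apply (chi_1 _ _ _ HV) in H1. apply (chi_0 _ _ _ HV) in H2. apply (chi_0 _ _ _ HV) in H3.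
  cbn [fst snd] in *. rewrite (atom0_iff x A d _ Hd) in H1. rewrite (atom0_iff x A d _ Hd) in H2. rewrite atom2_iff in H3.
  intros HA. apply H3. right. exists (x - d). split; auto.
  assert (~ (rhoR (w1 m) < rhoR (w2 m) /\ rhoR (w2 m) < rhoR (w3 m)) -> False) by (intros; apply H3; left; auto).
  apply Classical_Prop.NNPP in H. lra.
Qed.

Lemma WR_sound chi x A d m : Vrep chi (x, A) -> is_dist x A d -> WRg chi m <> 0%nat -> ~ A (x + d).
Proof.
  intros HV Hd H. unfold WRg in H. apply prod01 in H; try (eapply chi01; eauto).
  destruct H as [H1 [H2 H3]].
  apply (chi_1 _ _ _ HV) in H1. apply (chi_0 _ _ _ HV) in H2. apply (chi_0 _ _ _ HV) in H3.
  cbn [fst snd] in *. rewrite (atom1_iff x A d _ Hd) in H1. rewrite (atom1_iff x A d _ Hd) in H2. rewrite atom2_iff in H3.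
  intros HA. apply H3. right. exists (x + d). split; auto.
  assert (~ (rhoR (w1 m) < rhoR (w2 m) /\ rhoR (w2 m) < rhoR (w3 m)) -> False) by (intros; apply H3; left; auto).
  apply Classical_Prop.NNPP in H. lra.
Qed.

Lemma WL_complete chi x A d : Vrep chi (x, A) -> is_dist x A d -> closed_set A -> ~ A (x - d) ->
  exists m, WLg chi m <> 0%nat.
Proof.
  intros HV Hd Hc HL. destruct (closed_nbhd A _ Hc HL) as [e [He N]].
  destruct (rho_dense (x - d - e) (x - d)) as [a Ha]. lra.
  destruct (rho_dense (x - d) (x - d + e / 2)) as [b Hb]. lra.
  destruct (rho_dense (rhoR b) (x - d + e)) as [c Hc']. lra.
  exists (npair a (npair b c)). destruct (w_npair a b c) as [E1 [E2 E3]].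
  unfold WLg. apply prod01; try (eapply chi01; eauto). rewrite E1, E2.
  split; [|split].
  - apply (chi_1 _ _ _ HV). cbn [fst snd]. rewrite (atom0_iff x A d _ Hd). lra.
  - apply (chi_0 _ _ _ HV). cbn [fst snd]. rewrite (atom0_iff x A d _ Hd). lra.
  - apply (chi_0 _ _ _ HV). cbn [fst snd]. rewrite atom2_iff. rewrite E1, E2, E3.
    intros [H|[y [Hy H]]]. apply H; lra. apply (N y); auto. apply Rabs_def1; lra.
Qed.

Lemma WR_complete chi x A d : Vrep chi (x, A) -> is_dist x A d -> closed_set A -> ~ A (x + d) ->
  exists m, WRg chi m <> 0%nat.
Proof.
  intros HV Hd Hc HR. destruct (closed_nbhd A _ Hc HR) as [e [He N]].
  destruct (rho_dense (x + d) (x + d + e)) as [c Hc']. lra.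
  destruct (rho_dense (x + d - e / 2) (x + d)) as [b Hb]. lra.
  destruct (rho_dense (x + d - e) (rhoR b)) as [a Ha]. lra.
  exists (npair a (npair b c)). destruct (w_npair a b c) as [E1 [E2 E3]].
  unfold WRg. apply prod01; try (eapply chi01; eauto). rewrite E2, E3.
  split; [|split].
  - apply (chi_1 _ _ _ HV). cbn [fst snd]. rewrite (atom1_iff x A d _ Hd). lra.
  - apply (chi_0 _ _ _ HV). cbn [fst snd]. rewrite (atom1_iff x A d _ Hd). lra.
  - apply (chi_0 _ _ _ HV). cbn [fst snd]. rewrite atom2_iff. rewrite E1, E2, E3.
    intros [H|[y [Hy H]]]. apply H; lra. apply (N y); auto. apply Rabs_def1; lra.
Qed.

Lemma nbg_spec g m : nbg g m <> 0%nat <-> forall t, (t < m)%nat -> anyg g t = 0%nat.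
Proof.
  unfold nbg. set (P := fun t => negb (anyg g t =? 0)). rewrite neq_spec. split.
  - intros H t Ht. rewrite <- H in Ht. pose proof (bs_false P m t Ht). unfold P in H0.
    destruct (anyg g t); auto. discriminate.
  - intros H. pose proof (bs_le P m). destruct (Nat.eq_dec (bs P m) m); auto.
    assert (Hlt : (bs P m < m)%nat) by lia. pose proof (bs_true P m Hlt). assert (anyg g (bs P m) = 0%nat) by (apply H; exact Hlt). unfold P at 1 in H1. rewrite H2 in H1. discriminate.
Qed.

Lemma llpo_dom chi x A (j j' : bool) (m m' : nat) : Vrep chi (x, A) ->
  (if j then p1g chi m else p0g chi m) <> 0%nat -> (if j' then p1g chi m' else p0g chi m') <> 0%nat ->
  j = j' /\ m = m'.
Proof.
  intros HV.
  assert (K : forall (j : bool) (m : nat), (if j then p1g chi m else p0g chi m) <> 0%nat ->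
     anyg chi m <> 0%nat /\ nbg chi m <> 0%nat /\ (j = true <-> WLg chi m = 0%nat)).
  { intros j0 m0. unfold p0g, p1g, anyg. destruct j0; intros H.
    - assert (WRg chi m0 <> 0%nat) by (intro E; rewrite E in H; lia).
      assert (WLg chi m0 = 0%nat).
      { assert (Hw : WLg chi m0 = 0%nat \/ WLg chi m0 = 1%nat).
        { unfold WLg. destruct (chi01 chi _ (npair 0 (w1 m0)) HV) as [E|E]; rewrite E;
          destruct (chi01 chi _ (npair 0 (w2 m0)) HV) as [E'|E']; rewrite E';
          destruct (chi01 chi _ (npair 2 m0) HV) as [E''|E'']; rewrite E''; simpl; lia. }
        destruct Hw as [Hw|Hw]; auto. rewrite Hw in H. simpl in H. lia. }
      split; [lia|]. split; [intro E; rewrite E in H; lia|]. split; intros; auto.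
    - assert (WLg chi m0 <> 0%nat) by (intro E; rewrite E in H; lia).
      split; [lia|]. split; [intro E; rewrite E in H; lia|]. split; intros HH; [discriminate|lia]. }
  intros H1 H2. apply K in H1. apply K in H2. destruct H1 as [A1 [B1 C1]]. destruct H2 as [A2 [B2 C2]].
  rewrite nbg_spec in B1, B2.
  assert (m = m').
  { destruct (Nat.lt_trichotomy m m') as [H|[H|H]]; auto.
    exfalso; apply A1; apply B2; auto. exfalso; apply A2; apply B1; auto. }
  subst m'. split; auto. destruct j, j'; auto.
  - exfalso. assert (false = true) by (apply C2; apply C1; auto). discriminate.
  - exfalso. assert (false = true) by (apply C1; apply C2; auto). discriminate.
Qed.


Open Scope R_scope.

Definition VS : rspace := RSpace (R * (R -> Prop)) Vrep.
Definition domP (xa : R * (R -> Prop)) : Prop := closed_set (snd xa) /\ exists a, snd xa a.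
Definition g0 : mvf VS RS :=
  MVF VS RS domP (fun xa y => snd xa y /\ is_dist (fst xa) (snd xa) (Rabs (fst xa - y))).
Definition h0 : mvf RxAplusS VS := MVF RxAplusS VS domP (fun xa xa' => xa' = xa).

Lemma bpair_odd (p g : Baire) n : bpair p g (2 * n + 1)%nat = g n.
Proof.
  unfold bpair. replace (2 * n + 1)%nat with (S (2 * n))%nat by lia.
  rewrite Nat.even_succ, Nat.odd_mul. replace (Nat.odd 2) with false by reflexivity. cbn [andb].
  rewrite Nat.div2_succ_double. reflexivity.
Qed.
Lemma bpair_even (p g : Baire) n : bpair p g (2 * n)%nat = p n.
Proof.
  unfold bpair. rewrite Nat.even_mul. replace (Nat.even 2) with true by reflexivity. cbn [orb].
  rewrite Nat.div2_double. reflexivity.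
Qed.

Lemma outg_even chi m : outg chi (2 * m)%nat = p0g chi m.
Proof.
  unfold outg, neven. rewrite Nat.even_mul. replace (Nat.even 2) with true by reflexivity. cbn [orb].
  rewrite Nat.div2_double. reflexivity.
Qed.
Lemma outg_odd chi m : outg chi (2 * m + 1)%nat = p1g chi m.
Proof.
  unfold outg, neven. replace (2 * m + 1)%nat with (S (2 * m))%nat by lia.
  rewrite Nat.even_succ, Nat.odd_mul. replace (Nat.odd 2) with false by reflexivity. cbn [orb andb].
  rewrite Nat.div2_succ_double. reflexivity.
Qed.

Lemma rep_odd : RepN 1 (fun v => (2 * nth 0 v 0%nat + 1)%nat).
Proof. apply (mkop1 (eadd (emul (EConst 2) (EVar 0)) (EConst 1)) (fun n => 2 * n + 1)%nat). reflexivity. reflexivity. Qed.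
Lemma rep_id : RepN 1 (fun v => nth 0 v 0%nat).
Proof. apply rep_proj. lia. Qed.

Lemma least_any chi m : anyg chi m <> 0%nat -> exists m0, anyg chi m0 <> 0%nat /\ nbg chi m0 <> 0%nat.
Proof.
  intros H. destruct (least_nat (fun m => anyg chi m <> 0%nat)) with m as [m0 [H1 H2]].
  intros n. destruct (Nat.eq_dec (anyg chi n) 0); auto. auto.
  exists m0. split; auto. apply nbg_spec. intros t Ht. specialize (H2 t Ht). lia.
Qed.

Lemma WL01 chi xa m : Vrep chi xa -> (WLg chi m = 0 \/ WLg chi m = 1)%nat.
Proof.
  intros HV. unfold WLg. destruct (chi01 chi _ (npair 0 (w1 m)) HV) as [E|E]; rewrite E;
  destruct (chi01 chi _ (npair 0 (w2 m)) HV) as [E'|E']; rewrite E';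
  destruct (chi01 chi _ (npair 2 m) HV) as [E''|E'']; rewrite E''; simpl; lia.
Qed.

Lemma L_in chi x A d : Vrep chi (x, A) -> is_dist x A d -> closed_set A -> (exists a, A a) ->
  (forall m, p0g chi m = 0%nat) -> A (x - d).
Proof.
  intros HV Hd Hc Hne H0. apply Classical_Prop.NNPP. intros HL.
  destruct (WL_complete chi x A d HV Hd Hc HL) as [m Hm].
  destruct (least_any chi m) as [m0 [Ha Hnb]]. unfold anyg. lia.
  specialize (H0 m0). unfold p0g in H0. assert (WLg chi m0 = 0%nat) by (apply Nat.mul_eq_0 in H0; tauto).
  unfold anyg in Ha. assert (WRg chi m0 <> 0%nat) by lia.
  apply (WR_sound chi x A d m0 HV Hd) in H1.
  destruct (dist_attained x A d Hc Hne Hd); tauto.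
Qed.

Lemma R_in chi x A d : Vrep chi (x, A) -> is_dist x A d -> closed_set A -> (exists a, A a) ->
  (forall m, p1g chi m = 0%nat) -> A (x + d).
Proof.
  intros HV Hd Hc Hne H0. apply Classical_Prop.NNPP. intros HR.
  destruct (WR_complete chi x A d HV Hd Hc HR) as [m Hm].
  destruct (least_any chi m) as [m0 [Ha Hnb]]. unfold anyg. lia.
  assert (HL : A (x - d)) by (destruct (dist_attained x A d Hc Hne Hd); tauto).
  assert (WLg chi m0 = 0%nat).
  { destruct (WL01 chi _ m0 HV) as [E|E]; auto. exfalso. apply (WL_sound chi x A d m0 HV Hd); auto. lia. }
  unfold anyg in Ha. specialize (H0 m0). unfold p1g in H0. rewrite H in H0. simpl in H0.
  rewrite Nat.mul_1_r in H0. apply Nat.mul_eq_0 in H0. lia.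
Qed.

Lemma prod2 a b : (a = 0 \/ a = 1)%nat -> (b = 0 \/ b = 1)%nat -> (a * (1 - b) <> 0)%nat <-> (a = 1 /\ b = 0)%nat.
Proof. intros [->| ->] [->| ->]; simpl; split; intros; lia. Qed.

Lemma Rabs_le' a b : - b <= a <= b -> Rabs a <= b.
Proof. intros. unfold Rabs. destruct (Rcase_abs a); lra. Qed.

Lemma wred_g0 : Wred g0 LLPO.
Proof.
  destruct computes_llpo as [eK HK]. destruct computes_cauchy as [eH HH].
  exists eK, eH. intros G HG chi xa Hchi Hdom.
  destruct xa as [x A]. destruct Hdom as [Hc Hne]. cbn [fst snd] in *. simpl in Hchi.
  set (q := fun n => outg chi n).
  destruct (HG q (beven q, bodd q)) as [b [Hb Hval]].
  { split; reflexivity. }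
  { intros j j' m m' H1 H2. simpl in H1, H2. unfold beven, bodd, q in H1, H2.
    apply (llpo_dom chi x A j j' m m' Hchi).
    destruct j; [rewrite <- outg_odd | rewrite <- outg_even]; auto.
    destruct j'; [rewrite <- outg_odd | rewrite <- outg_even]; auto. }
  simpl in Hb, Hval.
  destruct (dist_exists x A Hne) as [d Hd]. pose proof (dist_nonneg x A d Hne Hd) as Hd0.
  set (h := bpair chi (G q)).
  assert (Hh1 : h 1%nat = if b then 1%nat else 0%nat) by (rewrite <- Hb; reflexivity).
  assert (Hh2 : forall t, h (2 * t)%nat = chi t) by (intros; apply bpair_even).
  assert (Hc01 : forall t, (h (2 * t) = 0 \/ h (2 * t) = 1)%nat) by (intros; rewrite Hh2; eapply chi01; eauto).
  destruct b.
  -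
    assert (HR : A (x + d)).
    { apply (R_in chi x A d Hchi Hd Hc Hne). intros m. rewrite <- outg_odd.
      change (outg chi (2 * m + 1)%nat) with (bodd q m). rewrite Hval. reflexivity. }
    assert (Hcond : forall n r, condg h n r <> 0%nat <->
        x + d < Qv r + (/2) ^ n /\ ~ (x + d < Qv r - (/2) ^ n)).
    { intros n r. unfold condg. rewrite Hh1. unfold nif. cbn [Nat.eqb].
      rewrite prod2 by auto. rewrite !Hh2.
      rewrite (chi_1 chi _ _ Hchi), (chi_0 chi _ _ Hchi). cbn [fst snd].
      rewrite !(atom1_iff x A d _ Hd), !rhoR_spec. cbn [Nat.eqb].
      replace (Qv r + 1 * (/ 2) ^ n) with (Qv r + (/2) ^ n) by ring.
      replace (Qv r + -1 * (/ 2) ^ n) with (Qv r - (/2) ^ n) by ring. tauto. }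
    destruct (HH h) as [s [Hs1 Hs2]].
    { intros n. destruct (dense_code (x + d) (x + d + (/2) ^ n)) as [r Hr].
      pose proof (pow_pos' n). lra. exists r. apply Hcond. pose proof (pow_pos' n). lra. }
    exists q, s. split; [apply HK|split; [apply Hs1|]].
    exists (x + d). split.
    + intros n. specialize (Hs2 n). apply Hcond in Hs2. change (Q2R (qdec (s n))) with (Qv (s n)).
      apply Rabs_le'. lra.
    + simpl. split; auto. replace (x - (x + d)) with (- d) by ring. rewrite Rabs_Ropp, Rabs_right by lra. auto.
  -
    assert (HL : A (x - d)).
    { apply (L_in chi x A d Hchi Hd Hc Hne). intros m. rewrite <- outg_even.
      change (outg chi (2 * m)%nat) with (beven q m). rewrite Hval. reflexivity. }
    assert (Hcond : forall n r, condg h n r <> 0%nat <->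
        Qv r - (/2) ^ n < x - d /\ ~ (Qv r + (/2) ^ n < x - d)).
    { intros n r. unfold condg. rewrite Hh1. unfold nif. cbn [Nat.eqb].
      rewrite prod2 by auto. rewrite !Hh2.
      rewrite (chi_1 chi _ _ Hchi), (chi_0 chi _ _ Hchi). cbn [fst snd].
      rewrite !(atom0_iff x A d _ Hd), !rhoR_spec. cbn [Nat.eqb].
      replace (Qv r + 1 * (/ 2) ^ n) with (Qv r + (/2) ^ n) by ring.
      replace (Qv r + -1 * (/ 2) ^ n) with (Qv r - (/2) ^ n) by ring. tauto. }
    destruct (HH h) as [s [Hs1 Hs2]].
    { intros n. destruct (dense_code (x - d - (/2) ^ n) (x - d)) as [r Hr].
      pose proof (pow_pos' n). lra. exists r. apply Hcond. pose proof (pow_pos' n). lra. }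
    exists q, s. split; [apply HK|split; [apply Hs1|]].
    exists (x - d). split.
    + intros n. specialize (Hs2 n). apply Hcond in Hs2. change (Q2R (qdec (s n))) with (Qv (s n)).
      apply Rabs_le'. lra.
    + simpl. split; auto. replace (x - (x - d)) with d by ring. rewrite Rabs_right by lra. auto.
Qed.


Open Scope R_scope.

Lemma wred_h0 : Wred h0 lim.
Proof.
  destruct computes_lim as [eK HK]. destruct (computes_pos (fun n => 2 * n + 1)%nat rep_odd) as [eH HH].
  exists eK, eH. intros G HG p xa Hp Hdom.
  destruct xa as [x A]. destruct Hp as [Hx HA]. cbn [fst snd] in *.
  set (q := fun N => chkg (fst (nunpair N)) (snd (nunpair N)) p).
  set (X := fun i n => q (npair i n)).
  set (y := fun a => if excluded_middle_informative (exists i, chkg i a p <> 0%nat) then 1%nat else 0%nat).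
  assert (HX : forall i a, X i a = chkg i a p).
  { intros i a. unfold X, q. rewrite nunpair_npair. reflexivity. }
  assert (Hconv : baire_conv X y).
  { intros k. induction k as [|k [N HN]].
    - exists 0%nat. intros; lia.
    - unfold y at 1 in HN. destruct (excluded_middle_informative (exists i, chkg i k p <> 0%nat)) as [[i0 Hi0]|Hno].
      + exists (Nat.max N i0). intros i Hi n Hn. destruct (Nat.eq_dec n k) as [->|Hnk].
        * rewrite HX. unfold y. destruct (excluded_middle_informative _) as [_|Hf]; [|exfalso; apply Hf; eauto].
          destruct (chkg_01 i k p) as [E|E]; auto. exfalso. apply (chkg_mono i0 i k p); auto; lia.
        * apply HN; lia.
      + exists N. intros i Hi n Hn. destruct (Nat.eq_dec n k) as [->|Hnk].
        * rewrite HX. unfold y. destruct (excluded_middle_informative _) as [Ht|_]; [exfalso; auto|].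
          destruct (chkg_01 i k p) as [E|E]; auto. exfalso. apply Hno. exists i. lia.
        * apply HN; lia. }
  destruct (HG q X) as [y' [Hy' Hconv']]. reflexivity. exists y. exact Hconv.
  simpl in Hy'. subst y'.
  assert (Hyy : forall a, G q a = y a).
  { intros a. destruct (Hconv (S a)) as [N1 H1]. destruct (Hconv' (S a)) as [N2 H2].
    rewrite <- (H2 (N1 + N2)%nat) by lia. apply H1; lia. }
  exists q, (fun n => bpair p (G q) (2 * n + 1)%nat). split; [apply HK|split; [apply HH|]].
  exists (x, A). split; [|reflexivity].
  intros a. cbn beta. rewrite bpair_odd, Hyy.
  pose proof (atom_iff p x A a Hx HA) as Hiff. rewrite <- chkg_ex in Hiff.
  unfold y. destruct (excluded_middle_informative _) as [Ht|Hf].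
  - left. split; auto. apply Hiff; auto.
  - right. split; auto. rewrite <- Hiff. auto.
Qed.

Lemma wred_final : Wred ProjR (mcomp g0 h0).
Proof.
  destruct (computes_pos (fun n => n) rep_id) as [eK HK].
  destruct (computes_pos (fun n => 2 * n + 1)%nat rep_odd) as [eH HH].
  exists eK, eH. intros G HG p xa Hp Hdom.
  destruct (HG p xa Hp) as [z [Hz [y [Hyx Hval]]]].
  { split. exact Hdom. intros y' ->. exact Hdom. }
  simpl in Hyx. subst y.
  exists p, (fun n => bpair p (G p) (2 * n + 1)%nat). split; [apply HK|split; [apply HH|]].
  exists z. split; [|exact Hval].
  intros n. rewrite bpair_odd. apply Hz.
Qed.

Theorem proposition4p16 : Wred_cprod ProjR LLPO lim.
Proof.
  exists RxAplusS, VS, RS, g0, h0. split; [exact wred_g0|split; [exact wred_h0|exact wred_final]].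
Qed.
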